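(* Let $0<q<1$ and $\nu\in\mathbb{R}$. Define, for $z\in\mathbb{C}\setminus(-\infty,0]$ (principal branches of powers), $$I_\nu^{(3)}((1-q^2)z;q^2)=\sum_{k=0}^\infty\frac{q^{k(\nu+k)}(1-q^2)^k(z/2)^{\nu+2k}}{(q^2;q^2)_k\,\Gamma_{q^2}(\nu+k+1)},$$ and, for non-integer $\nu$, $$K_\nu^{(3)}((1-q^2)z;q^2)=\tfrac12 q^{-\nu^2+\nu}\Gamma_{q^2}(\nu)\Gamma_{q^2}(1-\nu)\left[I_{-\nu}^{(3)}((1-q^2)z;q^2)-I_\nu^{(3)}((1-q^2)z;q^2)\right],$$ extended to integer $\nu=n$ by taking the limit $\nu\to n$. Then $$q^{-\nu/2}K_{\nu-1}^{(3)}((1-q^2)z;q^2)-q^{\nu/2}K_{\nu+1}^{(3)}((1-q^2)z;q^2)=-\frac{2}{(1-q^2)z}(q^{-\nu}-q^\nu)K_\nu^{(3)}((1-q^2)q^{1/2}z;q^2),$$ $$q^{-\nu/2}K_{\nu-1}^{(3)}((1-q^2)z;q^2)+q^{\nu/2}K_{\nu+1}^{(3)}((1-q^2)z;q^2)=-\frac{4}{(1-q^2)z}K_\nu^{(3)}((1-q^2)q^{-1/2}z;q^2)+\frac{2}{(1-q^2)z}(q^{-\nu}+q^\nu)K_\nu^{(3)}((1-q^2)q^{1/2}z;q^2).$$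
   Context: $(a;q)_k=\prod_{j=0}^{k-1}(1-aq^j)$, $(a;q)_\infty=\prod_{j\ge0}(1-aq^j)$. The $q$-Gamma function is $\Gamma_{q}(x)=\frac{(q;q)_\infty}{(q^x;q)_\infty}(1-q)^{1-x}$, used here with base $q^2$. *)

(* Defs.v *)
From Stdlib Require Import Reals ZArith ClassicalEpsilon.
From Coquelicot Require Import Coquelicot.
Open Scope R_scope.

Fixpoint qPoch (a q : R) (k : nat) : R :=
  match k with
  | O => 1
  | S k' => qPoch a q k' * (1 - a * q ^ k')
  end.

Definition qPochInf (a q : R) : R := real (Lim_seq (fun n => qPoch a q n)).

Definition qGamma (b x : R) : R :=
  qPochInf b b / qPochInf (Rpower b x) b * Rpower (1 - b) (1 - x).

(* principal argument on C \ (-oo,0]  (half-angle formula, in (-pi,pi)) *)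
Definition Carg (w : C) : R := 2 * atan (Im w / (Cmod w + Re w)).

Definition Cpowr (w : C) (a : R) : C :=
  (Rpower (Cmod w) a * cos (a * Carg w), Rpower (Cmod w) a * sin (a * Carg w)).

Definition I3_term (q nu : R) (z : C) (k : nat) : C :=
  Cmult (RtoC (Rpower q (INR k * (nu + INR k)) * (1 - q ^ 2) ^ k
               / (qPoch (q ^ 2) (q ^ 2) k * qGamma (q ^ 2) (nu + INR k + 1))))
        (Cpowr (Cdiv z (RtoC 2)) (nu + 2 * INR k)).

(* I3 q nu z  stands for  I_nu^{(3)}((1-q^2) z; q^2)  (series summed componentwise) *)
Definition I3 (q nu : R) (z : C) : C :=
  (Series (fun k => Re (I3_term q nu z k)), Series (fun k => Im (I3_term q nu z k))).

Definition K3_nonint (q nu : R) (z : C) : C :=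
  Cmult (RtoC (/ 2 * Rpower q (- nu ^ 2 + nu) * qGamma (q ^ 2) nu * qGamma (q ^ 2) (1 - nu)))
        (Cminus (I3 q (- nu) z) (I3 q nu z)).

Definition is_integer (x : R) : Prop := exists n : Z, x = IZR n.

(* K3 q nu z stands for K_nu^{(3)}((1-q^2) z; q^2); at integer nu it is the
   limit mu -> nu (mu <> nu) of the non-integer formula, taken componentwise *)
Definition K3 (q nu : R) (z : C) : C :=
  if excluded_middle_informative (is_integer nu)
  then (real (Lim (fun mu => Re (K3_nonint q mu z)) nu),
        real (Lim (fun mu => Im (K3_nonint q mu z)) nu))
  else K3_nonint q nu z.

(* Main.v *)
Require Import Defs.
From Stdlib Require Import Reals.
From Coquelicot Require Import Coquelicot.
From Stdlib Require Import Lra Lia Psatz ZArith ClassicalEpsilon.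
Open Scope R_scope.

Lemma qPoch_shift (a q : R) (n : nat) :
  qPoch a q (S n) = (1 - a) * qPoch (a * q) q n.
Proof.
  induction n as [|n IH].
  - simpl. ring.
  - change (qPoch a q (S (S n))) with (qPoch a q (S n) * (1 - a * q ^ (S n))).
    rewrite IH. simpl. ring.
Qed.

Lemma real_Rbar_mult (c : R) (l : Rbar) : real (Rbar_mult (Finite c) l) = c * real l.
Proof.
  destruct l as [l| |]; simpl; try ring;
  unfold Rbar_mult, Rbar_mult'; simpl;
  destruct (Rle_dec 0 c) as [H|H]; try destruct (Rle_lt_or_eq_dec 0 c H);
  simpl; ring.
Qed.

Lemma qPochInf_shift (a b : R) : qPochInf a b = (1 - a) * qPochInf (a * b) b.
Proof.
  unfold qPochInf. rewrite <- Lim_seq_incr_1.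
  rewrite (Lim_seq_ext _ (fun n => (1 - a) * qPoch (a * b) b n)).
  2:{ intro n. apply qPoch_shift. }
  rewrite Lim_seq_scal_l. apply real_Rbar_mult.
Qed.

Definition Qf (b x : R) : R := qPochInf (Rpower b x) b.

Lemma Q_shift (b x : R) : 0 < b -> Qf b x = (1 - Rpower b x) * Qf b (x + 1).
Proof.
  intro hb. unfold Qf. rewrite qPochInf_shift. f_equal. f_equal.
  rewrite Rpower_plus, Rpower_1; auto.
Qed.

Lemma Rpower_b_lt1 (b x : R) : 0 < b < 1 -> 0 < x -> Rpower b x < 1.
Proof.
  intros hb hx. unfold Rpower. rewrite <- exp_0. apply exp_increasing.
  assert (ln b < 0) by (rewrite <- ln_1; apply ln_increasing; lra).
  nra.
Qed.

Lemma Rpower_pos (b x : R) : 0 < Rpower b x.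
Proof. unfold Rpower. apply exp_pos. Qed.

Lemma Rpower_neq1 (b x : R) : 0 < b < 1 -> x <> 0 -> Rpower b x <> 1.
Proof.
  intros hb hx E. unfold Rpower in E. rewrite <- exp_0 in E.
  apply exp_inv in E.
  assert (ln b < 0) by (rewrite <- ln_1; apply ln_increasing; lra).
  apply Rmult_integral in E. destruct E; lra.
Qed.

Lemma qGamma_rec (b x : R) : 0 < b < 1 -> x <> 0 ->
  qGamma b (x + 1) = qGamma b x * (1 - Rpower b x) / (1 - b).
Proof.
  intros hb hx. unfold qGamma.
  pose proof (Q_shift b x (proj1 hb)) as E. unfold Qf in E. rewrite E.
  assert (Rpower (1 - b) (1 - x) = Rpower (1 - b) (1 - (x + 1)) * (1 - b)) as E2.
  { replace (1 - x) with ((1 - (x+1)) + 1) by ring. rewrite Rpower_plus, Rpower_1; lra. }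
  rewrite E2. pose proof (Rpower_neq1 b x hb hx).
  unfold Rdiv. rewrite Rinv_mult.
  set (iP := / qPochInf (Rpower b (x + 1)) b).
  field. split; lra.
Qed.

Lemma pow_le_one (x : R) (n : nat) : 0 <= x <= 1 -> x ^ n <= 1.
Proof. intro h. induction n; simpl; nra. Qed.

Lemma exp_le_mono (x y : R) : x <= y -> exp x <= exp y.
Proof. intro h. destruct (Rle_lt_or_eq_dec _ _ h). left; apply exp_increasing; auto. subst; lra. Qed.

Lemma one_minus_ge_exp (y a : R) : 0 <= y <= a -> a < 1 -> exp (- (y / (1 - a))) <= 1 - y.
Proof.
  intros hy ha. set (s := y / (1 - a)).
  assert (hs : 0 <= s) by (unfold s; apply Rdiv_le_0_compat; lra).
  assert (exp s >= 1 + s) by (pose proof (exp_ineq1_le s); lra).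
  rewrite exp_Ropp. 
  assert (y <= s * (1 - y)).
  { unfold s. apply (Rmult_le_reg_r (1 - a)); [lra|]. field_simplify; [|lra]. nra. }
  apply (Rmult_le_reg_r (exp s)); [apply exp_pos|].
  rewrite Rinv_l by (apply Rgt_not_eq, exp_pos). nra.
Qed.

Lemma qPoch_lower (a b : R) (n : nat) : 0 <= a < 1 -> 0 < b < 1 ->
  exp (- (a * (1 - b ^ n) / ((1 - a) * (1 - b)))) <= qPoch a b n.
Proof.
  intros ha hb. induction n as [|n IH].
  - simpl. replace (a * (1 - 1) / ((1 - a) * (1 - b))) with 0 by (field; lra).
    rewrite Ropp_0, exp_0. lra.
  - simpl qPoch.
    assert (hbn : 0 < b ^ n <= 1).
    { split. apply pow_lt; lra. apply pow_le_one; lra. }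
    assert (exp (- (a * b ^ n / (1 - a))) <= 1 - a * b ^ n).
    { apply one_minus_ge_exp; [split; nra| lra]. }
    replace (- (a * (1 - b ^ S n) / ((1 - a) * (1 - b))))
      with (- (a * (1 - b ^ n) / ((1 - a) * (1 - b))) + - (a * b ^ n / (1 - a)))
      by (simpl; field; lra).
    rewrite exp_plus. apply Rmult_le_compat; try (left; apply exp_pos); auto.
Qed.

Lemma qPoch_range (a b : R) (n : nat) : 0 <= a < 1 -> 0 < b < 1 ->
  0 < qPoch a b n <= 1.
Proof.
  intros ha hb. induction n as [|n IH]; simpl; [lra|].
  assert (hbn : 0 < b ^ n <= 1) by (split; [apply pow_lt; lra| apply pow_le_one; lra]).
  split. apply Rmult_lt_0_compat; nra. 
  assert (0 <= a * b ^ n) by nra. nra.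
Qed.

Lemma qPoch_decr (a b : R) (n : nat) : 0 <= a < 1 -> 0 < b < 1 ->
  qPoch a b (S n) <= qPoch a b n.
Proof.
  intros ha hb. simpl. pose proof (qPoch_range a b n ha hb).
  assert (hbn : 0 < b ^ n <= 1) by (split; [apply pow_lt; lra| apply pow_le_one; lra]).
  assert (0 <= a * b ^ n) by nra. nra.
Qed.


Definition Qlow (a b : R) := exp (- (a / ((1 - a) * (1 - b)))).

Lemma qPochInf_props (a b : R) : 0 <= a < 1 -> 0 < b < 1 ->
  is_lim_seq (fun n => qPoch a b n) (qPochInf a b) /\
  0 < Qlow a b <= qPochInf a b /\ qPochInf a b <= 1.
Proof.
  intros ha hb.
  assert (hlow : forall n, Qlow a b <= qPoch a b n).
  { intro n. eapply Rle_trans; [|apply qPoch_lower; auto].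
    unfold Qlow. apply exp_le_mono. apply Ropp_le_contravar.
    unfold Rdiv. rewrite !Rmult_assoc. apply Rmult_le_compat_l; [lra|].
    assert (0 < b ^ n) by (apply pow_lt; lra).
    assert (0 < / ((1 - a) * (1 - b))) by (apply Rinv_0_lt_compat; nra).
    nra. }
  destruct (ex_finite_lim_seq_decr (fun n => qPoch a b n) (Qlow a b)) as [l hl].
  { intro n. apply qPoch_decr; auto. }
  { auto. }
  assert (E : qPochInf a b = l).
  { unfold qPochInf. rewrite (is_lim_seq_unique _ _ hl). reflexivity. }
  rewrite E. split; [auto|]. split; [split; [apply exp_pos|]|].
  - assert (H := is_lim_seq_le (fun _ => Qlow a b) _ _ _ hlow (is_lim_seq_const _) hl). exact H.
  - assert (H := is_lim_seq_le _ (fun _ => 1) _ _ (fun n => proj2 (qPoch_range a b n ha hb)) hl (is_lim_seq_const _)). exact H.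
Qed.

Lemma Q_props (b x : R) : 0 < b < 1 -> 0 < x ->
  is_lim_seq (fun n => qPoch (Rpower b x) b n) (Qf b x) /\
  0 < Qf b x <= 1.
Proof.
  intros hb hx. pose proof (Rpower_b_lt1 b x hb hx). pose proof (Rpower_pos b x).
  destruct (qPochInf_props (Rpower b x) b) as [H1 [H2 H3]]; try lra.
  split; auto. unfold Qf. lra.
Qed.

Lemma Q_shift_n (b x : R) (m : nat) : 0 < b ->
  Qf b x = qPoch (Rpower b x) b m * Qf b (x + INR m).
Proof.
  intro hb. revert x. induction m as [|m IH]; intro x.
  - simpl. rewrite Rplus_0_r. ring.
  - rewrite Q_shift by auto. rewrite IH. rewrite qPoch_shift.
    replace (x + 1 + INR m) with (x + INR (S m)) by (rewrite S_INR; ring).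
    rewrite Rpower_plus, Rpower_1 by auto. ring.
Qed.

Definition nonint (x : R) := forall n : Z, x <> IZR n.

Lemma nonint_plus_nat (x : R) (k : nat) : nonint x -> x + INR k <> 0.
Proof.
  intros h E. apply (h (- Z.of_nat k)%Z). rewrite opp_IZR, <- INR_IZR_INZ. lra.
Qed.

Lemma qPoch_nonzero (b x : R) (m : nat) : 0 < b < 1 -> nonint x ->
  qPoch (Rpower b x) b m <> 0.
Proof.
  intros hb hx. induction m as [|m IH]; simpl; [lra|].
  apply Rmult_integral_contrapositive_currified; auto.
  rewrite <- (Rpower_pow m b) by lra. rewrite <- Rpower_plus.
  pose proof (Rpower_neq1 b (x + INR m) hb (nonint_plus_nat x m hx)). lra.
Qed.

Lemma Q_nonzero (b x : R) : 0 < b < 1 -> nonint x -> Qf b x <> 0.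
Proof.
  intros hb hx.
  destruct (archimed (- x)) as [h1 _].
  set (m := Z.to_nat (up (- x))).
  assert (hm : x + INR m > 0).
  { unfold m. rewrite INR_IZR_INZ. 
    destruct (Z_lt_le_dec (up (-x)) 0).
    - replace (Z.to_nat (up (-x))) with 0%nat by lia. simpl. 
      assert (IZR (up (-x)) <= -1) by (apply IZR_le; lia). lra.
    - rewrite Z2Nat.id by lia. lra. }
  rewrite (Q_shift_n b x m) by lra.
  apply Rmult_integral_contrapositive_currified.
  - apply qPoch_nonzero; auto.
  - destruct (Q_props b (x + INR m)) as [_ H]; lra.
Qed.

Lemma nonint_pos_nz (x : R) : 0 < x -> True. Proof. auto. Qed.

Lemma qGamma_nonzero (b x : R) : 0 < b < 1 -> nonint x -> qGamma b x <> 0.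
Proof.
  intros hb hx. unfold qGamma.
  pose proof (Q_props b 1 hb ltac:(lra)) as [_ H1]. unfold Qf in H1.
  rewrite Rpower_1 in H1 by lra.
  pose proof (Q_nonzero b x hb hx) as H2. unfold Qf in H2.
  pose proof (Rpower_pos (1 - b) (1 - x)).
  unfold Rdiv. repeat apply Rmult_integral_contrapositive_currified; try lra.
  apply Rinv_neq_0_compat; auto.
Qed.

Definition slit (w : C) := ~ (Im w = 0 /\ Re w <= 0).

Lemma slit_props (w : C) : slit w -> 0 < Cmod w /\ 0 < Cmod w + Re w.
Proof.
  intro h. unfold slit in h. unfold Cmod.
  set (x := fst w). set (y := snd w). change (Im w) with y in h. change (Re w) with x in *.
  assert (hs : 0 <= sqrt (x ^ 2 + y ^ 2)) by apply sqrt_pos.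
  assert (hsq : sqrt (x ^ 2 + y ^ 2) * sqrt (x ^ 2 + y ^ 2) = x ^ 2 + y ^ 2)
    by (apply sqrt_sqrt; nra).
  destruct (Req_dec y 0) as [hy|hy].
  - assert (x > 0) by (destruct (Rle_dec x 0); [exfalso; tauto| lra]).
    subst y. split; nra.
  - assert (0 < y ^ 2) by (simpl; nra).
    split; [nra|]. 
    destruct (Rle_dec x 0); [|nra].
    assert (sqrt (x ^ 2 + y ^ 2) > - x) by nra. lra.
Qed.

Lemma Cpowr_add (w : C) (a c : R) : Cpowr w (a + c) = Cmult (Cpowr w a) (Cpowr w c).
Proof.
  unfold Cpowr. rewrite Rpower_plus.
  rewrite Rmult_plus_distr_r, cos_plus, sin_plus.
  apply injective_projections; simpl; ring.
Qed.

Lemma Cpowr_1 (w : C) : slit w -> Cpowr w 1 = w.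
Proof.
  intro h. destruct (slit_props w h) as [h1 h2].
  unfold Cpowr, Carg. rewrite Rpower_1 by auto. rewrite !Rmult_1_l.
  revert h1 h2. unfold Cmod. destruct w as [x y]. unfold Re, Im. cbv [fst snd]. intros h1 h2.
  set (r := sqrt (x ^ 2 + y ^ 2)) in *.
  assert (hr : r * r = x ^ 2 + y ^ 2) by (apply sqrt_sqrt; nra).
  set (t := y / (r + x)).
  assert (hs : sqrt (1 + t²) * sqrt (1 + t²) = 1 + t²)
    by (apply sqrt_sqrt; unfold Rsqr; nra).
  assert (hsp : 0 < sqrt (1 + t²)) by (apply sqrt_lt_R0; unfold Rsqr; nra).
  rewrite cos_2a, sin_2a, cos_atan, sin_atan.
  assert (ht : t * (r + x) = y) by (unfold t; field; intro; lra).
  assert (h3 : r - x = t * t * (r + x)).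
  { assert (E : (r - x - t * t * (r + x)) * (r + x) = 0).
    { rewrite <- ht in hr. simpl in hr. ring_simplify. ring_simplify in hr. lra. }
    apply Rmult_integral in E. destruct E; lra. }
  set (s := sqrt (1 + t²)) in *.
  apply injective_projections; cbn [fst snd].
  - replace (r * (1 / s * (1 / s) - t / s * (t / s))) with (r * (1 - t * t) / (s * s))
      by (field; intro; lra).
    rewrite hs. unfold Rsqr. apply (Rmult_eq_reg_r (1 + t * t)); [|nra].
    field_simplify; [|nra]. ring_simplify in h3. ring_simplify. lra.
  - replace (r * (2 * (t / s) * (1 / s))) with (2 * r * t / (s * s))
      by (field; intro; lra).
    rewrite hs. unfold Rsqr. apply (Rmult_eq_reg_r (1 + t * t)); [|nra].
    field_simplify; [|nra]. rewrite <- ht.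
    replace (t ^ 2 * (t * (r + x)) + t * (r + x)) with (t * (t * t * (r + x) + (r + x))) by ring.
    rewrite <- h3. ring.
Qed.

Lemma Cmod_scale (c : R) (w : C) : 0 < c -> Cmod (Cmult (RtoC c) w) = c * Cmod w.
Proof. intro hc. rewrite Cmod_mult, Cmod_R, Rabs_pos_eq; lra. Qed.

Lemma Re_scale (c : R) (w : C) : Re (Cmult (RtoC c) w) = c * Re w.
Proof. destruct w; unfold Re, RtoC, Cmult; simpl; ring. Qed.
Lemma Im_scale (c : R) (w : C) : Im (Cmult (RtoC c) w) = c * Im w.
Proof. destruct w; unfold Im, RtoC, Cmult; simpl; ring. Qed.

Lemma Carg_scale (c : R) (w : C) : 0 < c -> Carg (Cmult (RtoC c) w) = Carg w.
Proof.
  intro hc. unfold Carg. rewrite Cmod_scale, Re_scale, Im_scale by auto.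
  f_equal. f_equal. unfold Rdiv.
  replace (c * Cmod w + c * Re w) with (c * (Cmod w + Re w)) by ring.
  rewrite Rinv_mult. set (iD := / (Cmod w + Re w)). field. lra.
Qed.

Lemma Cpowr_scale (c : R) (w : C) (a : R) : 0 < c -> 0 < Cmod w ->
  Cpowr (Cmult (RtoC c) w) a = Cmult (RtoC (Rpower c a)) (Cpowr w a).
Proof.
  intros hc hw. unfold Cpowr. rewrite Carg_scale, Cmod_scale by auto.
  rewrite <- Rpower_mult_distr by auto.
  apply injective_projections; unfold RtoC, Cmult; cbv [fst snd]; ring.
Qed.

Lemma slit_scale (c : R) (w : C) : 0 < c -> slit w -> slit (Cmult (RtoC c) w).
Proof.
  intros hc h [h1 h2]. apply h. rewrite Re_scale in h2. rewrite Im_scale in h1.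
  split. apply Rmult_integral in h1; destruct h1; lra.
  apply (Rmult_le_reg_l c); lra.
Qed.

Lemma Cdiv2 (w : C) : Cdiv w (RtoC 2) = Cmult (RtoC (/ 2)) w.
Proof.
  apply injective_projections; destruct w; unfold Cdiv, Cinv, Cmult, RtoC; cbv [fst snd]; field.
Qed.

Lemma slit_div2 (w : C) : slit w -> slit (Cdiv w (RtoC 2)).
Proof. intro h. rewrite Cdiv2. apply slit_scale; auto; lra. Qed.

Lemma slit_nz (w : C) : slit w -> w <> RtoC 0.
Proof.
  intros h E. apply h. subst. unfold RtoC, Re, Im. simpl. lra.
Qed.

Lemma Cinv_Cpowr (z : C) (a : R) : slit z ->
  Cmult (Cinv z) (Cpowr (Cdiv z (RtoC 2)) a) =
  Cmult (RtoC (/ 2)) (Cpowr (Cdiv z (RtoC 2)) (a - 1)).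
Proof.
  intro h. replace a with ((a - 1) + 1) at 1 by ring.
  rewrite Cpowr_add, Cpowr_1 by (apply slit_div2; auto).
  pose proof (slit_nz z h).
  rewrite Cdiv2. field. auto.
Qed.

Lemma exsR_scal (c : R) (a : nat -> R) : ex_series a -> ex_series (fun k => c * a k).
Proof. intro h. apply (@ex_series_scal_l R_AbsRing R_NormedModule c a h). Qed.
Lemma exsR_plus (a b : nat -> R) : ex_series a -> ex_series b -> ex_series (fun k => a k + b k).
Proof. intros h1 h2. apply (@ex_series_plus R_AbsRing R_NormedModule a b h1 h2). Qed.
Lemma exsR_minus (a b : nat -> R) : ex_series a -> ex_series b -> ex_series (fun k => a k - b k).
Proof. intros h1 h2. apply (@ex_series_minus R_AbsRing R_NormedModule a b h1 h2). Qed.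

Definition CS (a : nat -> C) : C := (Series (fun k => Re (a k)), Series (fun k => Im (a k))).
Definition cex (a : nat -> C) := ex_series (fun k => Re (a k)) /\ ex_series (fun k => Im (a k)).

Lemma I3_CS (q nu : R) (z : C) : I3 q nu z = CS (I3_term q nu z).
Proof. reflexivity. Qed.

Lemma cex_ext (a b : nat -> C) : (forall k, a k = b k) -> cex a -> cex b.
Proof.
  intros E [h1 h2]. split.
  - eapply ex_series_ext; [|exact h1]. intro k. simpl. rewrite E. auto.
  - eapply ex_series_ext; [|exact h2]. intro k. simpl. rewrite E. auto.
Qed.

Lemma CS_ext (a b : nat -> C) : (forall k, a k = b k) -> CS a = CS b.
Proof.
  intros E. unfold CS. f_equal; apply Series_ext; intro; rewrite E; auto.
Qed.

Lemma cex_plus (a b : nat -> C) : cex a -> cex b -> cex (fun k => Cplus (a k) (b k)).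
Proof.
  intros [h1 h2] [h3 h4]. split; simpl.
  apply (exsR_plus (fun k => Re (a k)) (fun k => Re (b k))); auto.
  apply (exsR_plus (fun k => Im (a k)) (fun k => Im (b k))); auto.
Qed.

Lemma cex_scal (c : C) (a : nat -> C) : cex a -> cex (fun k => Cmult c (a k)).
Proof.
  intros [h1 h2]. split; unfold Cmult; simpl.
  - apply (exsR_minus (fun k => fst c * Re (a k)) (fun k => snd c * Im (a k)));
    apply exsR_scal; auto.
  - apply (exsR_plus (fun k => fst c * Im (a k)) (fun k => snd c * Re (a k)));
    apply exsR_scal; auto.
Qed.

Lemma cex_minus (a b : nat -> C) : cex a -> cex b -> cex (fun k => Cminus (a k) (b k)).
Proof.
  intros h1 h2. apply (cex_ext (fun k => Cplus (a k) (Cmult (RtoC (-1)) (b k)))).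
  - intro k. unfold Cminus. f_equal. apply injective_projections; unfold Cmult, Copp, RtoC; simpl; ring.
  - apply cex_plus; auto. apply cex_scal; auto.
Qed.

Lemma CS_plus (a b : nat -> C) : cex a -> cex b ->
  CS (fun k => Cplus (a k) (b k)) = Cplus (CS a) (CS b).
Proof.
  intros [h1 h2] [h3 h4]. unfold cex, CS, Cplus, Re, Im in *. apply injective_projections; cbn [fst snd].
  - apply (Series_plus (fun k => fst (a k)) (fun k => fst (b k))); auto.
  - apply (Series_plus (fun k => snd (a k)) (fun k => snd (b k))); auto.
Qed.

Lemma CS_scal (c : C) (a : nat -> C) : cex a ->
  CS (fun k => Cmult c (a k)) = Cmult c (CS a).
Proof.
  intros [h1 h2]. unfold cex, CS, Cmult, Re, Im in *. apply injective_projections; cbn [fst snd].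
  - rewrite (Series_minus (fun k => fst c * fst (a k)) (fun k => snd c * snd (a k)))
      by (apply exsR_scal; auto).
    rewrite !Series_scal_l. reflexivity.
  - rewrite (Series_plus (fun k => fst c * snd (a k)) (fun k => snd c * fst (a k)))
      by (apply exsR_scal; auto).
    rewrite !Series_scal_l. ring.
Qed.

Lemma CS_minus (a b : nat -> C) : cex a -> cex b ->
  CS (fun k => Cminus (a k) (b k)) = Cminus (CS a) (CS b).
Proof.
  intros h1 h2.
  rewrite (CS_ext _ (fun k => Cplus (a k) (Cmult (RtoC (-1)) (b k)))).
  - rewrite CS_plus, CS_scal; auto. 2: apply cex_scal; auto.
    unfold Cminus. f_equal. apply injective_projections; unfold Cmult, Copp, RtoC; simpl; ring.
  - intro k. unfold Cminus. f_equal. apply injective_projections; unfold Cmult, Copp, RtoC; simpl; ring.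
Qed.

Lemma cex_incr (a : nat -> C) : cex a <-> cex (fun k => a (S k)).
Proof.
  unfold cex. split; intros [h1 h2]; split.
  all: try (apply (proj1 (ex_series_incr_1 (fun k => Re (a k)))); auto).
  all: try (apply (proj1 (ex_series_incr_1 (fun k => Im (a k)))); auto).
  all: try (apply (proj2 (ex_series_incr_1 (fun k => Re (a k)))); auto).
  all: try (apply (proj2 (ex_series_incr_1 (fun k => Im (a k)))); auto).
Qed.

Lemma CS_incr (a : nat -> C) : cex a -> CS a = Cplus (a 0%nat) (CS (fun k => a (S k))).
Proof.
  intros [h1 h2]. unfold CS. apply injective_projections; simpl.
  - apply (Series_incr_1 (fun k => Re (a k))); auto.
  - apply (Series_incr_1 (fun k => Im (a k))); auto.
Qed.

Lemma im_le_Cmod' (c : C) : Rabs (Im c) <= Cmod c.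
Proof.
  unfold Cmod. rewrite <- sqrt_Rsqr_abs. apply sqrt_le_1_alt. unfold Rsqr, Im. 
  simpl. pose proof (Rle_0_sqr (fst c)). unfold Rsqr in H. nra.
Qed.

Lemma cex_bound (a : nat -> C) (M : nat -> R) :
  (forall k, Cmod (a k) <= M k) -> ex_series M -> cex a.
Proof.
  intros hb hM. split.
  - apply (ex_series_le (fun k => Re (a k)) M); auto.
    intro k. eapply Rle_trans; [apply re_le_Cmod| apply hb].
  - apply (ex_series_le (fun k => Im (a k)) M); auto.
    intro k. eapply Rle_trans; [apply im_le_Cmod'| apply hb].
Qed.

Lemma ex_series_gauss (q r0 : R) : 0 < q < 1 -> 0 < r0 ->
  ex_series (fun n => (INR n + 1) * q ^ (n * n) * r0 ^ n).
Proof.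
  intros hq hR.
  set (a := fun n : nat => (INR n + 1) * q ^ (n * n) * r0 ^ n).
  assert (hpos : forall n, 0 < a n).
  { intro n. unfold a. pose proof (pos_INR n).
    apply Rmult_lt_0_compat; [apply Rmult_lt_0_compat|]; try lra; apply pow_lt; lra. }
  apply (ex_series_ext (fun n => Rabs (a n))).
  { intro n. rewrite Rabs_pos_eq; [reflexivity| left; apply hpos]. }
  apply (ex_series_DAlembert a 0); [lra| intro n; pose proof (hpos n); lra|].
  apply (is_lim_seq_le_le (fun _ => 0) _ (fun n => 2 * q * r0 * (q ^ 2) ^ n)).
  - intro n. split; [apply Rabs_pos|].
    rewrite Rabs_pos_eq.
    2:{ left. apply Rdiv_lt_0_compat; apply hpos. }
    unfold a. rewrite S_INR.
    replace (S n * S n)%nat with (n * n + (2 * n + 1))%nat by lia.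
    rewrite pow_add, <- pow_mult, pow_add, pow_1.
    rewrite <- tech_pow_Rmult.
    pose proof (pos_INR n).
    assert (0 < q ^ (n * n)) by (apply pow_lt; lra).
    assert (0 < r0 ^ n) by (apply pow_lt; lra).
    assert (0 < q ^ (2 * n)) by (apply pow_lt; nra).
    replace ((INR n + 1 + 1) * (q ^ (n * n) * (q ^ (2 * n) * q)) * (r0 * r0 ^ n) /
             ((INR n + 1) * q ^ (n * n) * r0 ^ n))
      with ((INR n + 2) / (INR n + 1) * q * r0 * q ^ (2 * n)) by (field; split; lra).
    apply Rmult_le_compat_r; [lra|].
    apply Rmult_le_compat_r; [lra|].
    apply Rmult_le_compat_r; [lra|].
    apply (Rmult_le_reg_r (INR n + 1)); [lra|].
    unfold Rdiv. rewrite Rmult_assoc, Rinv_l by lra. lra.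
  - apply is_lim_seq_const.
  - replace (Finite 0) with (Rbar_mult (2 * q * r0) 0) by (simpl; f_equal; ring).
    apply is_lim_seq_scal_l. apply is_lim_seq_geom.
    rewrite Rabs_pos_eq by nra. nra.
Qed.

Lemma ex_series_gauss0 (q r0 : R) : 0 < q < 1 -> 0 < r0 ->
  ex_series (fun n => q ^ (n * n) * r0 ^ n).
Proof.
  intros hq hR.
  apply (ex_series_le (fun n => q ^ (n * n) * r0 ^ n) (fun n => (INR n + 1) * q ^ (n * n) * r0 ^ n));
    [|apply ex_series_gauss; auto].
  intro n. change norm with Rabs. 
  assert (0 < q ^ (n * n)) by (apply pow_lt; lra).
  assert (0 < r0 ^ n) by (apply pow_lt; lra). pose proof (pos_INR n).
  assert (0 < q ^ (n * n) * r0 ^ n) by (apply Rmult_lt_0_compat; auto).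
  rewrite Rabs_pos_eq by nra. rewrite Rmult_assoc. nra.
Qed.

Lemma cex_bound_from (a : nat -> C) (M : nat -> R) (K : nat) :
  (forall k, (K <= k)%nat -> Cmod (a k) <= M k) -> ex_series M -> cex a.
Proof.
  intros hb hM.
  assert (h : cex (fun k => a (K + k)%nat)).
  { apply (cex_bound _ (fun k => M (K + k)%nat)).
    - intro k. apply hb. lia.
    - apply (proj1 (ex_series_incr_n M K)); auto. }
  destruct h as [h1 h2]. split.
  - apply (proj2 (ex_series_incr_n (fun k => Re (a k)) K)); auto.
  - apply (proj2 (ex_series_incr_n (fun k => Im (a k)) K)); auto.
Qed.

Lemma Cmod_Cpowr (w : C) (a : R) : Cmod (Cpowr w a) = Rpower (Cmod w) a.
Proof.
  unfold Cpowr, Cmod at 1. cbn [fst snd].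
  set (P := Rpower (Cmod w) a). set (t := a * Carg w).
  replace ((P * cos t) ^ 2 + (P * sin t) ^ 2) with (P ^ 2 * (sin t ^ 2 + cos t ^ 2)) by ring.
  rewrite sin2_cos2' || idtac.
  assert (sin t ^ 2 + cos t ^ 2 = 1) as E.
  { pose proof (sin2_cos2 t). unfold Rsqr in H. simpl. lra. }
  rewrite E, Rmult_1_r. apply sqrt_pow2. left; apply Rpower_pos.
Qed.

Lemma qPoch_ge (b : R) (k : nat) : 0 < b < 1 -> (1 - b) ^ k <= qPoch b b k.
Proof.
  intro hb. induction k as [|k IH]; simpl; [lra|].
  assert (0 < b ^ k <= 1) by (split; [apply pow_lt; lra| apply pow_le_one; lra]).
  assert (0 < (1 - b) ^ k) by (apply pow_lt; lra).
  assert (1 - b <= 1 - b * b ^ k) by nra.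
  rewrite Rmult_comm. apply Rmult_le_compat; lra.
Qed.

Lemma inv_qGamma_bound (b x : R) : 0 < b < 1 -> 1 <= x ->
  Rabs (/ qGamma b x) <= / Qf b 1.
Proof.
  intros hb hx. unfold qGamma.
  destruct (Q_props b 1 hb ltac:(lra)) as [_ H1].
  destruct (Q_props b x hb ltac:(lra)) as [_ H2].
  unfold Qf in H1, H2. rewrite Rpower_1 in H1 by lra.
  unfold Qf. rewrite Rpower_1 by lra.
  pose proof (Rpower_pos (1 - b) (1 - x)).
  assert (Rpower (1 - b) (1 - x) >= 1).
  { unfold Rpower.
    assert (ln (1 - b) < 0) by (rewrite <- ln_1; apply ln_increasing; lra).
    assert (0 <= (1 - x) * ln (1 - b)) by nra.
    pose proof (exp_le_mono _ _ H3). rewrite exp_0 in H4. lra. }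
  unfold Rdiv. rewrite !Rinv_mult, Rinv_inv.
  set (A := qPochInf b b) in *. set (B := qPochInf (Rpower b x) b) in *.
  set (C0 := Rpower (1 - b) (1 - x)) in *.
  assert (0 < / A) by (apply Rinv_0_lt_compat; lra).
  assert (0 < / C0 <= 1).
  { split. apply Rinv_0_lt_compat; lra. rewrite <- Rinv_1. apply Rinv_le_contravar; lra. }
  rewrite !Rabs_mult, (Rabs_pos_eq (/ A)), (Rabs_pos_eq (/ C0)), (Rabs_pos_eq B) by lra.
  replace (/ A) with (/ A * 1 * 1) at 2 by ring.
  apply Rmult_le_compat; try nra.
Qed.

Lemma Rpower_L1 (q mu : R) (k : nat) : 0 < q ->
  Rpower q (INR k * (mu + INR k)) = (Rpower q mu) ^ k * q ^ (k * k).
Proof.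
  intro hq. replace (INR k * (mu + INR k)) with (mu * INR k + INR (k * k))
    by (rewrite mult_INR; ring).
  rewrite Rpower_plus, <- Rpower_mult, !Rpower_pow; auto. apply Rpower_pos.
Qed.

Lemma Rpower_L2 (r mu : R) (k : nat) : 0 < r ->
  Rpower r (mu + 2 * INR k) = Rpower r mu * (r ^ 2) ^ k.
Proof.
  intro hr. replace (2 * INR k) with (INR (2 * k)) by (rewrite mult_INR; simpl; ring).
  rewrite Rpower_plus, Rpower_pow, pow_mult; auto.
Qed.

Lemma exists_nat_ge (x : R) : exists K : nat, x <= INR K.
Proof.
  destruct (archimed x) as [h1 _].
  exists (Z.to_nat (up x)).
  destruct (Z_lt_le_dec (up x) 0).
  - replace (Z.to_nat (up x)) with 0%nat by lia. simpl.
    assert (IZR (up x) <= -1) by (apply IZR_le; lia). lra.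
  - rewrite INR_IZR_INZ, Z2Nat.id by lia. lra.
Qed.

Lemma cex_I3 (q mu : R) (z : C) : 0 < q < 1 -> slit z -> cex (I3_term q mu z).
Proof.
  intros hq hz.
  set (b := q ^ 2). assert (hb : 0 < b < 1) by (unfold b; split; nra).
  destruct (exists_nat_ge (- mu)) as [K hK].
  set (r := Cmod (Cdiv z (RtoC 2))).
  assert (hr : 0 < r) by (apply (slit_props _ (slit_div2 z hz))).
  destruct (Q_props b 1 hb ltac:(lra)) as [_ HQ1].
  set (M := fun k : nat => / Qf b 1 * Rpower r mu * (q ^ (k * k) * (Rpower q mu * r ^ 2) ^ k)).
  apply (cex_bound_from _ M K).
  - intros k hk. unfold I3_term. rewrite Cmod_mult, Cmod_R, Cmod_Cpowr. fold r.
    rewrite Rpower_L2, Rpower_L1 by lra.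
    fold b.
    assert (hx : 1 <= mu + INR k + 1) by (apply le_INR in hk; lra).
    pose proof (inv_qGamma_bound b _ hb hx) as HG.
    pose proof (qPoch_ge b k hb) as HP.
    assert (0 < (1 - b) ^ k) by (apply pow_lt; lra).
    assert (0 < q ^ (k * k)) by (apply pow_lt; lra).
    assert (0 < Rpower q mu ^ k) by (apply pow_lt, Rpower_pos).
    assert (0 < (r ^ 2) ^ k) by (apply pow_lt; nra).
    pose proof (Rpower_pos r mu).
    unfold Rdiv. rewrite Rinv_mult.
    rewrite !Rabs_mult. 
    rewrite (Rabs_pos_eq (Rpower q mu ^ k)) by lra.
    rewrite (Rabs_pos_eq (q ^ (k * k))) by lra.
    rewrite (Rabs_pos_eq ((1 - b) ^ k)) by lra.
    rewrite (Rabs_pos_eq (/ qPoch b b k)) by (left; apply Rinv_0_lt_compat; lra).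
    unfold M. rewrite Rpow_mult_distr.
    set (G := Rabs (/ qGamma b (mu + INR k + 1))) in *.
    assert (0 <= G) by apply Rabs_pos.
    assert ((1 - b) ^ k * / qPoch b b k <= 1).
    { apply (Rmult_le_reg_r (qPoch b b k)); [lra|]. rewrite Rmult_assoc, Rinv_l by lra. lra. }
    assert (0 <= (1 - b) ^ k * / qPoch b b k).
    { left. apply Rmult_lt_0_compat; [lra| apply Rinv_0_lt_compat; lra]. }
    set (X := (1 - b) ^ k * / qPoch b b k) in *.
    set (Y := Rpower q mu ^ k * q ^ (k * k)).
    assert (0 < Y) by (unfold Y; nra).
    apply Rle_trans with ((Y * (Rpower r mu * (r ^ 2) ^ k)) * (X * G)).
    { right. unfold X, Y. ring. }
    apply Rle_trans with ((Y * (Rpower r mu * (r ^ 2) ^ k)) * (1 * / Qf b 1)).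
    { apply Rmult_le_compat_l; [left; apply Rmult_lt_0_compat; [lra| apply Rmult_lt_0_compat; lra]|]. apply Rmult_le_compat; lra. }
    right. unfold Y. ring.
  - unfold M. apply exsR_scal. apply ex_series_gauss0; auto.
    apply Rmult_lt_0_compat; [apply Rpower_pos| nra].
Qed.

Definition coef (q mu : R) (k : nat) : R :=
  Rpower q (INR k * (mu + INR k)) * (1 - q ^ 2) ^ k
    / (qPoch (q ^ 2) (q ^ 2) k * qGamma (q ^ 2) (mu + INR k + 1)).

Lemma I3_term_coef (q mu : R) (w : C) (k : nat) :
  I3_term q mu w k = Cmult (RtoC (coef q mu k)) (Cpowr (Cdiv w (RtoC 2)) (mu + 2 * INR k)).
Proof. reflexivity. Qed.

Lemma Cdiv_scale (c : R) (z : C) :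
  Cdiv (Cmult (RtoC c) z) (RtoC 2) = Cmult (RtoC c) (Cdiv z (RtoC 2)).
Proof. rewrite !Cdiv2. field. Qed.

Lemma term_scaled (q mu c : R) (z : C) (k : nat) : 0 < c -> slit z ->
  Cmult (Cinv z) (I3_term q mu (Cmult (RtoC c) z) k) =
  Cmult (RtoC (coef q mu k * Rpower c (mu + 2 * INR k) * / 2))
        (Cpowr (Cdiv z (RtoC 2)) (mu + 2 * INR k - 1)).
Proof.
  intros hc hz. rewrite I3_term_coef, Cdiv_scale.
  rewrite Cpowr_scale by (auto; apply (slit_props _ (slit_div2 z hz))).
  replace (Cmult (Cinv z) (Cmult (RtoC (coef q mu k))
     (Cmult (RtoC (Rpower c (mu + 2 * INR k))) (Cpowr (Cdiv z (RtoC 2)) (mu + 2 * INR k)))))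
    with (Cmult (RtoC (coef q mu k * Rpower c (mu + 2 * INR k)))
           (Cmult (Cinv z) (Cpowr (Cdiv z (RtoC 2)) (mu + 2 * INR k)))).
  2:{ rewrite RtoC_mult. ring. }
  rewrite Cinv_Cpowr by auto. rewrite !RtoC_mult. ring.
Qed.

Lemma Rpower_sq (q x : R) : 0 < q -> Rpower (q ^ 2) x = Rpower q x * Rpower q x.
Proof.
  intro hq. replace (q ^ 2) with (Rpower q 2).
  2:{ replace 2 with (INR 2) by (simpl; ring). apply Rpower_pow; auto. }
  rewrite Rpower_mult, <- Rpower_plus. f_equal. ring.
Qed.

Lemma Rpower_half (q x : R) : Rpower (Rpower q (1 / 2)) x = Rpower q (x / 2).
Proof. rewrite Rpower_mult. f_equal. field. Qed.
Lemma Rpower_mhalf (q x : R) : Rpower (Rpower q (- 1 / 2)) x = / Rpower q (x / 2).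
Proof. rewrite Rpower_mult, <- Rpower_Ropp. f_equal. field. Qed.

Ltac rpn q := 
  repeat (rewrite ?Rpower_plus, ?Rpower_pow by lra).

Section NF.
Variables (q mu : R) (k : nat).
Hypothesis hq : 0 < q.
Let h := Rpower q (mu / 2).
Let E0 := Rpower q (INR k * (mu + INR k)).

Lemma nf_mu : Rpower q mu = h * h.
Proof. unfold h. rewrite <- Rpower_plus. f_equal. field. Qed.
Lemma nf_mmu : Rpower q (- mu) = / (h * h).
Proof. rewrite Rpower_Ropp, nf_mu. auto. Qed.
Lemma nf_mmu2 : Rpower q (- mu / 2) = / h.
Proof. unfold h. rewrite <- Rpower_Ropp. f_equal. field. Qed.
Lemma nf_1 : Rpower q (INR (S k) * (mu - 1 + INR (S k))) = E0 * (h * h) * q ^ k.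
Proof.
  unfold E0. rewrite <- nf_mu. rewrite <- (Rpower_pow k q) by auto. rewrite <- !Rpower_plus.
  f_equal. rewrite S_INR. ring.
Qed.
Lemma nf_2 : Rpower q (INR k * (mu + 1 + INR k)) = E0 * q ^ k.
Proof.
  unfold E0. rewrite <- (Rpower_pow k q) by auto. rewrite <- !Rpower_plus.
  f_equal. ring.
Qed.
Lemma nf_3 : Rpower q (INR (S k) * (mu + INR (S k))) = E0 * (h * h) * (q ^ k * q ^ k * q).
Proof.
  unfold E0. rewrite <- nf_mu. 
  replace (q ^ k * q ^ k * q) with (q ^ (k + k + 1)) by (rewrite !pow_add; ring).
  rewrite <- (Rpower_pow _ q) by auto. rewrite <- !Rpower_plus.
  f_equal. rewrite S_INR, !plus_INR. simpl. ring.
Qed.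
Lemma nf_4 : Rpower q ((mu + 2 * INR (S k)) / 2) = h * (q ^ k * q).
Proof.
  unfold h. replace (q ^ k * q) with (q ^ (k + 1)) by (rewrite !pow_add; ring).
  rewrite <- (Rpower_pow _ q) by auto. rewrite <- !Rpower_plus.
  f_equal. rewrite plus_INR, S_INR. simpl. field.
Qed.
Lemma nf_5 : Rpower (q ^ 2) (mu + INR k + 1) = (h * h) * (h * h) * (q ^ k * q ^ k * (q * q)).
Proof.
  rewrite Rpower_sq by auto.
  replace (q ^ k * q ^ k * (q * q)) with (q ^ (k + 1) * q ^ (k + 1)) by (rewrite !pow_add; ring).
  rewrite <- nf_mu. rewrite <- (Rpower_pow _ q) by auto. rewrite <- !Rpower_plus.
  f_equal. rewrite plus_INR. simpl. ring.
Qed.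
End NF.

Lemma pow2k (q : R) (k : nat) : (q ^ 2) ^ k = q ^ k * q ^ k.
Proof. replace (q ^ 2) with (q * q) by ring. apply Rpow_mult_distr. Qed.

Lemma nonint_add_nat (x : R) (n : nat) : nonint x -> nonint (x + INR n).
Proof.
  intros h m E. apply (h (m - Z.of_nat n)%Z). rewrite minus_IZR, <- INR_IZR_INZ. lra.
Qed.
Lemma nonint_add_int (x : R) (m : Z) : nonint x -> nonint (x + IZR m).
Proof.
  intros h m' E. apply (h (m' - m)%Z). rewrite minus_IZR. lra.
Qed.
Lemma nonint_opp (x : R) : nonint x -> nonint (- x).
Proof. intros h m E. apply (h (- m)%Z). rewrite opp_IZR. lra. Qed.

Lemma nonint_k1 (x : R) (k : nat) : nonint x -> nonint (x + INR k + 1).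
Proof.
  intro h. apply (nonint_add_int _ 1%Z). apply nonint_add_nat; auto.
Qed.

Lemma nonint_nz (x : R) : nonint x -> x <> 0.
Proof. intros h E. apply (h 0%Z). auto. Qed.

Section Coefs.
Variables (q mu : R) (k : nat).
Hypotheses (hq : 0 < q < 1) (hmu : nonint mu).

Let b := q ^ 2.
Let h := Rpower q (mu / 2).
Let E0 := Rpower q (INR k * (mu + INR k)).
Let G := qGamma b (mu + INR k + 1).
Let P := qPoch b b k.

Lemma hb : 0 < b < 1. Proof. unfold b. split; nra. Qed.
Lemma G_nz : G <> 0.
Proof. apply qGamma_nonzero. apply hb. apply nonint_k1; auto. Qed.
Lemma P_pos : 0 < P.
Proof. unfold P. pose proof hb. apply qPoch_range; lra. Qed.
Lemma h_pos : 0 < h.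
Proof. apply Rpower_pos. Qed.
Lemma G_rec : qGamma b (mu + INR k + 1 + 1) =
  G * (1 - (h * h) * (h * h) * (q ^ k * q ^ k * (q * q))) / (1 - q ^ 2).
Proof.
  unfold G. rewrite qGamma_rec. 2: apply hb. 2: apply nonint_nz, nonint_k1; auto.
  unfold b. rewrite nf_5 by lra. reflexivity.
Qed.
Lemma D_nz : 1 - (h * h) * (h * h) * (q ^ k * q ^ k * (q * q)) <> 0.
Proof.
  unfold h. rewrite <- nf_5 by lra. pose proof (Rpower_neq1 (q ^ 2) (mu + INR k + 1) hb).
  pose proof (nonint_nz _ (nonint_k1 mu k hmu)). intro E. apply H; auto. lra.
Qed.
Lemma Pk_nz : 1 - q ^ 2 * (q ^ 2) ^ k <> 0.
Proof.
  assert (0 < (q ^ 2) ^ k <= 1) by (split; [apply pow_lt; nra| apply pow_le_one; nra]).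
  assert (q ^ 2 < 1) by nra. nra.
Qed.

Lemma coefR1 :
  Rpower q (- mu / 2) * coef q (mu - 1) (S k) - Rpower q (mu / 2) * coef q (mu + 1) k
  = 2 * (Rpower q (- mu) - Rpower q mu) / (1 - q ^ 2) *
    (coef q mu (S k) * Rpower (Rpower q (1 / 2)) (mu + 2 * INR (S k)) * / 2).
Proof.
  unfold coef. rewrite Rpower_half.
  rewrite (nf_1 q mu k), (nf_2 q mu k), (nf_3 q mu k), (nf_4 q mu k), (nf_mmu q mu), (nf_mmu2 q mu), (nf_mu q mu) by lra.
  replace (mu - 1 + INR (S k) + 1) with (mu + INR k + 1) by (rewrite S_INR; ring).
  replace (mu + 1 + INR k + 1) with (mu + INR k + 1 + 1) by ring.
  replace (mu + INR (S k) + 1) with (mu + INR k + 1 + 1) by (rewrite S_INR; ring).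
  fold b. rewrite G_rec. fold G.
  simpl qPoch. fold P. unfold b. rewrite pow2k.
  pose proof G_nz. pose proof P_pos. pose proof h_pos. pose proof D_nz. pose proof Pk_nz.
  rewrite pow2k in H3. fold h in H1 |- *.
  rewrite <- !tech_pow_Rmult.
  set (A := (1 - q ^ 2) ^ k). set (E := Rpower q (INR k * (mu + INR k))). set (Qk := q ^ k) in *.
  field. repeat split; try lra; try (intro; nra).
Qed.

Lemma coefR2 :
  Rpower q (- mu / 2) * coef q (mu - 1) (S k) + Rpower q (mu / 2) * coef q (mu + 1) k
  = 4 / (1 - q ^ 2) *
    (coef q mu (S k) * Rpower (Rpower q (- 1 / 2)) (mu + 2 * INR (S k)) * / 2)
    - 2 * (Rpower q (- mu) + Rpower q mu) / (1 - q ^ 2) *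
    (coef q mu (S k) * Rpower (Rpower q (1 / 2)) (mu + 2 * INR (S k)) * / 2).
Proof.
  unfold coef. rewrite Rpower_half, Rpower_mhalf.
  rewrite (nf_1 q mu k), (nf_2 q mu k), (nf_3 q mu k), (nf_4 q mu k), (nf_mmu q mu), (nf_mmu2 q mu), (nf_mu q mu) by lra.
  replace (mu - 1 + INR (S k) + 1) with (mu + INR k + 1) by (rewrite S_INR; ring).
  replace (mu + 1 + INR k + 1) with (mu + INR k + 1 + 1) by ring.
  replace (mu + INR (S k) + 1) with (mu + INR k + 1 + 1) by (rewrite S_INR; ring).
  fold b. rewrite G_rec. fold G.
  simpl qPoch. fold P. unfold b. rewrite pow2k.
  pose proof G_nz. pose proof P_pos. pose proof h_pos. pose proof D_nz. pose proof Pk_nz.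
  rewrite pow2k in H3. fold h in H1 |- *.
  rewrite <- !tech_pow_Rmult.
  set (A := (1 - q ^ 2) ^ k). set (E := Rpower q (INR k * (mu + INR k))). set (Qk := q ^ k) in *.
  assert (0 < Qk) by (unfold Qk; apply pow_lt; lra).
  field. repeat split; try lra; try (intro; nra).
Qed.
End Coefs.

Section Coefs0.
Variables (q mu : R).
Hypotheses (hq : 0 < q < 1) (hmu : nonint mu).
Let h := Rpower q (mu / 2).

Lemma G0_rec : qGamma (q ^ 2) (mu + INR 0 + 1) =
  qGamma (q ^ 2) (mu - 1 + INR 0 + 1) * (1 - (h * h) * (h * h)) / (1 - q ^ 2).
Proof.
  replace (mu + INR 0 + 1) with (mu + 1) by (simpl; ring).
  replace (mu - 1 + INR 0 + 1) with mu by (simpl; ring).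
  rewrite qGamma_rec. 2: apply hb; auto. 2: apply nonint_nz; auto.
  rewrite Rpower_sq, (nf_mu q mu) by lra. reflexivity.
Qed.

Lemma coefs0_aux : qGamma (q ^ 2) (mu - 1 + INR 0 + 1) <> 0 /\ 1 - (h * h) * (h * h) <> 0 /\ 0 < h.
Proof.
  split; [|split].
  - replace (mu - 1 + INR 0 + 1) with mu by (simpl; ring). apply qGamma_nonzero; auto. apply hb; auto.
  - unfold h. rewrite <- (nf_mu q mu), <- Rpower_sq by lra.
    pose proof (Rpower_neq1 (q ^ 2) mu (hb q hq) (nonint_nz _ hmu)). lra.
  - apply Rpower_pos.
Qed.

Lemma coefR1_0 :
  Rpower q (- mu / 2) * coef q (mu - 1) 0
  = 2 * (Rpower q (- mu) - Rpower q mu) / (1 - q ^ 2) *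
    (coef q mu 0 * Rpower (Rpower q (1 / 2)) (mu + 2 * INR 0) * / 2).
Proof.
  unfold coef. rewrite Rpower_half, G0_rec.
  destruct coefs0_aux as [H1 [H2 H3]].
  replace ((mu + 2 * INR 0) / 2) with (mu / 2) by (simpl; field).
  rewrite (nf_mmu q mu), (nf_mmu2 q mu), (nf_mu q mu) by lra. fold h.
  simpl in *. replace (0 * (mu - 1 + 0)) with 0 by ring. replace (0 * (mu + 0)) with 0 by ring.
  rewrite Rpower_O by lra.
  field. repeat split; try lra; try (intro; nra).
Qed.

Lemma coefR2_0 :
  Rpower q (- mu / 2) * coef q (mu - 1) 0
  = 4 / (1 - q ^ 2) *
    (coef q mu 0 * Rpower (Rpower q (- 1 / 2)) (mu + 2 * INR 0) * / 2)
    - 2 * (Rpower q (- mu) + Rpower q mu) / (1 - q ^ 2) *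
    (coef q mu 0 * Rpower (Rpower q (1 / 2)) (mu + 2 * INR 0) * / 2).
Proof.
  unfold coef. rewrite Rpower_half, Rpower_mhalf, G0_rec.
  destruct coefs0_aux as [H1 [H2 H3]].
  replace ((mu + 2 * INR 0) / 2) with (mu / 2) by (simpl; field).
  rewrite (nf_mmu q mu), (nf_mmu2 q mu), (nf_mu q mu) by lra. fold h.
  simpl in *. replace (0 * (mu - 1 + 0)) with 0 by ring. replace (0 * (mu + 0)) with 0 by ring.
  rewrite Rpower_O by lra.
  field. repeat split; try lra; try (intro; nra).
Qed.
End Coefs0.

Lemma C_lin_m (a c1 b c2 g c3 : R) (P : C) : a * c1 - b * c2 = g * c3 ->
  Cminus (Cmult (RtoC a) (Cmult (RtoC c1) P)) (Cmult (RtoC b) (Cmult (RtoC c2) P))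
  = Cmult (RtoC g) (Cmult (RtoC c3) P).
Proof.
  intro E. rewrite !Cmult_assoc, <- !RtoC_mult.
  replace (Cminus (Cmult (RtoC (a * c1)) P) (Cmult (RtoC (b * c2)) P))
    with (Cmult (RtoC (a * c1 - b * c2)) P) by (rewrite RtoC_minus; ring).
  rewrite E. reflexivity.
Qed.

Lemma C_lin_0 (a c1 g c3 : R) (P : C) : a * c1 = g * c3 ->
  Cmult (RtoC a) (Cmult (RtoC c1) P) = Cmult (RtoC g) (Cmult (RtoC c3) P).
Proof. intro E. rewrite !Cmult_assoc, <- !RtoC_mult, E. reflexivity. Qed.

Lemma C_lin_p (a c1 b c2 g1 c3 g2 c4 : R) (P : C) :
  a * c1 + b * c2 = g1 * c3 - g2 * c4 ->
  Cplus (Cmult (RtoC a) (Cmult (RtoC c1) P)) (Cmult (RtoC b) (Cmult (RtoC c2) P))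
  = Cminus (Cmult (RtoC g1) (Cmult (RtoC c3) P)) (Cmult (RtoC g2) (Cmult (RtoC c4) P)).
Proof.
  intro E. rewrite !Cmult_assoc, <- !RtoC_mult.
  replace (Cplus (Cmult (RtoC (a * c1)) P) (Cmult (RtoC (b * c2)) P))
    with (Cmult (RtoC (a * c1 + b * c2)) P) by (rewrite RtoC_plus; ring).
  rewrite E, RtoC_minus. ring.
Qed.

Lemma C_lin_0' (a c1 g1 c3 g2 c4 : R) (P : C) : a * c1 = g1 * c3 - g2 * c4 ->
  Cmult (RtoC a) (Cmult (RtoC c1) P) =
  Cminus (Cmult (RtoC g1) (Cmult (RtoC c3) P)) (Cmult (RtoC g2) (Cmult (RtoC c4) P)).
Proof.
  intro E. rewrite !Cmult_assoc, <- !RtoC_mult, E, RtoC_minus. ring.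
Qed.

Section IRel.
Variables (q mu : R) (z : C).
Hypotheses (hq : 0 < q < 1) (hmu : nonint mu) (hz : slit z).
Let sq := Rpower q (1 / 2).
Let isq := Rpower q (- 1 / 2).
Let z1 := Cmult (RtoC sq) z.
Let z2 := Cmult (RtoC isq) z.

Lemma z1_slit : slit z1. Proof. apply slit_scale; auto. apply Rpower_pos. Qed.
Lemma z2_slit : slit z2. Proof. apply slit_scale; auto. apply Rpower_pos. Qed.

Lemma I_R1 :
  Cminus (Cmult (RtoC (Rpower q (- mu / 2))) (I3 q (mu - 1) z))
         (Cmult (RtoC (Rpower q (mu / 2))) (I3 q (mu + 1) z))
  = Cmult (RtoC (2 * (Rpower q (- mu) - Rpower q mu) / (1 - q ^ 2)))
          (Cmult (Cinv z) (I3 q mu z1)).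
Proof.
  set (a := Rpower q (- mu / 2)). set (b := Rpower q (mu / 2)).
  set (g := 2 * (Rpower q (- mu) - Rpower q mu) / (1 - q ^ 2)).
  set (X := fun k => Cmult (RtoC a) (I3_term q (mu - 1) z k)).
  set (Y := fun k => Cmult (RtoC b) (I3_term q (mu + 1) z k)).
  set (Z := fun k => Cmult (RtoC g) (Cmult (Cinv z) (I3_term q mu z1 k))).
  assert (cX : cex X) by (apply cex_scal, cex_I3; auto).
  assert (cY : cex Y) by (apply cex_scal, cex_I3; auto).
  assert (cZ : cex Z) by (apply cex_scal, cex_scal, cex_I3; auto; apply z1_slit).
  rewrite !I3_CS.
  rewrite <- (CS_scal _ (I3_term q mu z1)) by (apply cex_I3; auto; apply z1_slit).
  rewrite <- (CS_scal (RtoC g)) by (apply cex_scal, cex_I3; auto; apply z1_slit).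
  rewrite <- !CS_scal by (apply cex_I3; auto).
  fold X Y Z.
  assert (cXS : cex (fun k => X (S k))) by (apply (proj1 (cex_incr X)); auto).
  rewrite (CS_incr X cX), (CS_incr Z cZ).
  assert (E0 : X 0%nat = Z 0%nat).
  { unfold X, Z. unfold z1. rewrite (term_scaled q mu sq z 0) by (auto; apply Rpower_pos).
    rewrite !I3_term_coef.
    replace (mu - 1 + 2 * INR 0) with (mu + 2 * INR 0 - 1) by ring.
    apply C_lin_0. unfold a, g, sq. apply coefR1_0; auto. }
  assert (ES : forall k, Cminus (X (S k)) (Y k) = Z (S k)).
  { intro k. unfold X, Y, Z. unfold z1.
    rewrite (term_scaled q mu sq z (S k)) by (auto; apply Rpower_pos).
    rewrite !I3_term_coef.
    replace (mu - 1 + 2 * INR (S k)) with (mu + 1 + 2 * INR k) by (rewrite S_INR; ring).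
    replace (mu + 2 * INR (S k) - 1) with (mu + 1 + 2 * INR k) by (rewrite S_INR; ring).
    apply C_lin_m. unfold a, b, g, sq. apply coefR1; auto. }
  rewrite <- (CS_ext _ _ ES).
  rewrite CS_minus by auto. rewrite E0. ring.
Qed.

Lemma I_R2 :
  Cplus (Cmult (RtoC (Rpower q (- mu / 2))) (I3 q (mu - 1) z))
        (Cmult (RtoC (Rpower q (mu / 2))) (I3 q (mu + 1) z))
  = Cminus (Cmult (RtoC (4 / (1 - q ^ 2))) (Cmult (Cinv z) (I3 q mu z2)))
           (Cmult (RtoC (2 * (Rpower q (- mu) + Rpower q mu) / (1 - q ^ 2)))
                  (Cmult (Cinv z) (I3 q mu z1))).
Proof.
  set (a := Rpower q (- mu / 2)). set (b := Rpower q (mu / 2)).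
  set (g1 := 4 / (1 - q ^ 2)).
  set (g2 := 2 * (Rpower q (- mu) + Rpower q mu) / (1 - q ^ 2)).
  set (X := fun k => Cmult (RtoC a) (I3_term q (mu - 1) z k)).
  set (Y := fun k => Cmult (RtoC b) (I3_term q (mu + 1) z k)).
  set (Z1 := fun k => Cmult (RtoC g1) (Cmult (Cinv z) (I3_term q mu z2 k))).
  set (Z2 := fun k => Cmult (RtoC g2) (Cmult (Cinv z) (I3_term q mu z1 k))).
  set (W := fun k => Cminus (Z1 k) (Z2 k)).
  assert (cX : cex X) by (apply cex_scal, cex_I3; auto).
  assert (cY : cex Y) by (apply cex_scal, cex_I3; auto).
  assert (cZ1 : cex Z1) by (apply cex_scal, cex_scal, cex_I3; auto; apply z2_slit).
  assert (cZ2 : cex Z2) by (apply cex_scal, cex_scal, cex_I3; auto; apply z1_slit).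
  assert (cW : cex W) by (apply cex_minus; auto).
  rewrite !I3_CS.
  rewrite <- (CS_scal _ (I3_term q mu z1)) by (apply cex_I3; auto; apply z1_slit).
  rewrite <- (CS_scal _ (I3_term q mu z2)) by (apply cex_I3; auto; apply z2_slit).
  rewrite <- (CS_scal (RtoC g1)) by (apply cex_scal, cex_I3; auto; apply z2_slit).
  rewrite <- (CS_scal (RtoC g2)) by (apply cex_scal, cex_I3; auto; apply z1_slit).
  rewrite <- !CS_scal by (apply cex_I3; auto).
  fold X Y Z1 Z2. rewrite <- CS_minus by auto. fold W.
  assert (cXS : cex (fun k => X (S k))) by (apply (proj1 (cex_incr X)); auto).
  rewrite (CS_incr X cX), (CS_incr W cW).
  assert (E0 : X 0%nat = W 0%nat).
  { unfold W, X, Z1, Z2. unfold z1, z2.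
    rewrite (term_scaled q mu sq z 0) by (auto; apply Rpower_pos).
    rewrite (term_scaled q mu isq z 0) by (auto; apply Rpower_pos).
    rewrite !I3_term_coef.
    replace (mu - 1 + 2 * INR 0) with (mu + 2 * INR 0 - 1) by ring.
    apply C_lin_0'. unfold a, g1, g2, sq, isq. apply coefR2_0; auto. }
  assert (ES : forall k, Cplus (X (S k)) (Y k) = W (S k)).
  { intro k. unfold W, X, Y, Z1, Z2. unfold z1, z2.
    rewrite (term_scaled q mu sq z (S k)) by (auto; apply Rpower_pos).
    rewrite (term_scaled q mu isq z (S k)) by (auto; apply Rpower_pos).
    rewrite !I3_term_coef.
    replace (mu - 1 + 2 * INR (S k)) with (mu + 1 + 2 * INR k) by (rewrite S_INR; ring).
    replace (mu + 2 * INR (S k) - 1) with (mu + 1 + 2 * INR k) by (rewrite S_INR; ring).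
    apply C_lin_p. unfold a, b, g1, g2, sq, isq. apply coefR2; auto. }
  rewrite <- (CS_ext _ _ ES).
  rewrite CS_plus by auto. rewrite E0. ring.
Qed.
End IRel.

Definition Aq (q nu : R) : R :=
  / 2 * Rpower q (- nu ^ 2 + nu) * qGamma (q ^ 2) nu * qGamma (q ^ 2) (1 - nu).

Lemma K3_nonint_A (q nu : R) (z : C) :
  K3_nonint q nu z = Cmult (RtoC (Aq q nu)) (Cminus (I3 q (- nu) z) (I3 q nu z)).
Proof. reflexivity. Qed.

Section AShift.
Variables (q nu : R).
Hypotheses (hq : 0 < q < 1) (hnu : nonint nu).
Let u := Rpower q nu.
Lemma u_pos : 0 < u. Proof. apply Rpower_pos. Qed.
Lemma bnu : Rpower (q ^ 2) nu = u * u.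
Proof. rewrite Rpower_sq by lra. reflexivity. Qed.
Lemma bmnu : Rpower (q ^ 2) (- nu) = / u * / u.
Proof. rewrite Rpower_sq, Rpower_Ropp by lra. reflexivity. Qed.
Lemma q_m1 (x : R) : Rpower q (x - 1) = Rpower q x * / q.
Proof.
  unfold Rminus. rewrite Rpower_plus, Rpower_Ropp, Rpower_1 by lra. reflexivity.
Qed.
Lemma q_p1 (x : R) : Rpower q (x + 1) = Rpower q x * q.
Proof. rewrite Rpower_plus, Rpower_1 by lra. reflexivity. Qed.

Lemma A_up : Aq q (nu + 1) = - Aq q nu.
Proof.
  unfold Aq. replace (1 - (nu + 1)) with (- nu) by ring.
  pose proof (hb q hq) as hb.
  rewrite qGamma_rec by (auto; apply nonint_nz; auto).
  replace (1 - nu) with (- nu + 1) by ring.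
  rewrite qGamma_rec by (auto; apply nonint_nz, nonint_opp; auto).
  rewrite bnu, bmnu.
  replace (- (nu + 1) ^ 2 + (nu + 1)) with ((- nu ^ 2 + nu) + - nu + - nu) by ring.
  rewrite !Rpower_plus, !Rpower_Ropp. fold u.
  pose proof u_pos.
  assert (u * u <> 1).
  { rewrite <- bnu. apply Rpower_neq1; auto; apply nonint_nz; auto. }
  assert (1 - / u * / u <> 0).
  { intro E. assert (H1 : / u * / u = 1) by lra. apply H0. rewrite <- Rinv_mult in H1.
    rewrite <- (Rinv_inv (u * u)), H1. apply Rinv_1. }
  field. repeat split; try lra; try (intro; nra); try (apply Rgt_not_eq; apply Rpower_pos).
Qed.

Lemma A_down : Aq q (nu - 1) = - Aq q nu.
Proof.
  unfold Aq. pose proof (hb q hq) as hb.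
  replace (1 - (nu - 1)) with ((1 - nu) + 1) by ring.
  rewrite qGamma_rec by (auto; intro E; apply (hnu 1%Z); lra).
  assert (EG : qGamma (q ^ 2) nu = qGamma (q ^ 2) (nu - 1) * (1 - Rpower (q ^ 2) (nu - 1)) / (1 - q ^ 2)).
  { replace nu with (nu - 1 + 1) at 1 by ring. apply qGamma_rec; auto. intro E; apply (hnu 1%Z); lra. }
  rewrite EG.
  assert (E1 : Rpower (q ^ 2) (nu - 1) = u * u * / (q * q)).
  { rewrite Rpower_sq, q_m1 by lra. fold u. field. lra. }
  assert (E2 : Rpower (q ^ 2) (1 - nu) = q * q * / (u * u)).
  { rewrite Rpower_sq by lra. unfold Rminus. rewrite Rpower_plus, Rpower_1, Rpower_Ropp by lra.
    fold u. pose proof u_pos. field. lra. }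
  rewrite E1, E2.
  replace (- (nu - 1) ^ 2 + (nu - 1)) with ((- nu ^ 2 + nu) + nu + nu - 1 - 1) by ring.
  rewrite !q_m1, !Rpower_plus. fold u.
  pose proof u_pos.
  assert (u * u * / (q * q) <> 1).
  { rewrite <- E1. apply Rpower_neq1; auto. intro E; apply (hnu 1%Z); lra. }
  assert (q * q * / (u * u) <> 1).
  { rewrite <- E2. apply Rpower_neq1; auto. intro E; apply (hnu 1%Z); lra. }
  assert (1 - u * u * / (q * q) <> 0) by lra.
  assert (1 - q * q * / (u * u) <> 0) by lra.
  field. repeat split; try lra; try (intro; nra); try (apply Rgt_not_eq; apply Rpower_pos).
Qed.
End AShift.

Lemma RtoC_nz (x : R) : x <> 0 -> RtoC x <> RtoC 0.
Proof. intros h E. apply h. injection E. auto. Qed.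

Section KRel.
Variables (q nu : R) (z : C).
Hypotheses (hq : 0 < q < 1) (hnu : nonint nu) (hz : slit z).
Let z1 := Cmult (RtoC (Rpower q (1 / 2))) z.
Let z2 := Cmult (RtoC (Rpower q (- 1 / 2))) z.

Lemma KR1 :
  Cminus (Cmult (RtoC (Rpower q (- nu / 2))) (K3_nonint q (nu - 1) z))
         (Cmult (RtoC (Rpower q (nu / 2))) (K3_nonint q (nu + 1) z))
  = Cmult (RtoC (- 2 * (Rpower q (- nu) - Rpower q nu)))
      (Cmult (Cinv (Cmult (RtoC (1 - q ^ 2)) z)) (K3_nonint q nu z1)).
Proof.
  rewrite !K3_nonint_A. rewrite A_up, A_down by auto.
  replace (- (nu - 1)) with (- nu + 1) by ring.
  replace (- (nu + 1)) with (- nu - 1) by ring.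
  pose proof (I_R1 q nu z hq hnu hz) as R1a.
  pose proof (I_R1 q (- nu) z hq (nonint_opp _ hnu) hz) as R1b.
  replace (- - nu / 2) with (nu / 2) in R1b by field.
  replace (- - nu) with nu in R1b by ring.
  fold z1 in R1a, R1b.
  set (a := I3 q (- nu + 1) z) in *. set (b := I3 q (nu - 1) z) in *.
  set (c := I3 q (- nu - 1) z) in *. set (d := I3 q (nu + 1) z) in *.
  set (e := I3 q (- nu) z1) in *. set (f := I3 q nu z1) in *.
  set (p := Rpower q (- nu / 2)) in *. set (p' := Rpower q (nu / 2)) in *.
  set (A := Aq q nu).
  transitivity (Cmult (RtoC (- A)) (Cminus (Copp (Cminus (Cmult (RtoC p') c) (Cmult (RtoC p) a)))
     (Cminus (Cmult (RtoC p) b) (Cmult (RtoC p') d)))).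
  { ring. }
  rewrite R1a, R1b.
  assert (hD : 1 - q ^ 2 <> 0) by (intro; nra).
  pose proof (slit_nz z hz).
  rewrite !RtoC_div by auto.
  assert (hD' : RtoC (1 - q ^ 2) <> RtoC 0) by (apply RtoC_nz; auto).
  set (D := RtoC (1 - q ^ 2)) in *. rewrite !RtoC_mult, !RtoC_minus, !RtoC_opp.
  field; repeat split; auto; try (apply RtoC_nz; auto).
Qed.

Lemma KR2 :
  Cplus (Cmult (RtoC (Rpower q (- nu / 2))) (K3_nonint q (nu - 1) z))
        (Cmult (RtoC (Rpower q (nu / 2))) (K3_nonint q (nu + 1) z))
  = Cplus
      (Cmult (RtoC (- 4))
        (Cmult (Cinv (Cmult (RtoC (1 - q ^ 2)) z)) (K3_nonint q nu z2)))
      (Cmult (RtoC (2 * (Rpower q (- nu) + Rpower q nu)))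
        (Cmult (Cinv (Cmult (RtoC (1 - q ^ 2)) z)) (K3_nonint q nu z1))).
Proof.
  rewrite !K3_nonint_A. rewrite A_up, A_down by auto.
  replace (- (nu - 1)) with (- nu + 1) by ring.
  replace (- (nu + 1)) with (- nu - 1) by ring.
  pose proof (I_R2 q nu z hq hnu hz) as R1a.
  pose proof (I_R2 q (- nu) z hq (nonint_opp _ hnu) hz) as R1b.
  replace (- - nu / 2) with (nu / 2) in R1b by field.
  replace (- - nu) with nu in R1b by ring.
  fold z1 z2 in R1a, R1b.
  set (a := I3 q (- nu + 1) z) in *. set (b := I3 q (nu - 1) z) in *.
  set (c := I3 q (- nu - 1) z) in *. set (d := I3 q (nu + 1) z) in *.
  set (e := I3 q (- nu) z1) in *. set (f := I3 q nu z1) in *.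
  set (e2 := I3 q (- nu) z2) in *. set (f2 := I3 q nu z2) in *.
  set (p := Rpower q (- nu / 2)) in *. set (p' := Rpower q (nu / 2)) in *.
  set (A := Aq q nu).
  transitivity (Cmult (RtoC (- A)) (Cminus (Cplus (Cmult (RtoC p') c) (Cmult (RtoC p) a))
     (Cplus (Cmult (RtoC p) b) (Cmult (RtoC p') d)))).
  { ring. }
  rewrite R1a, R1b.
  assert (hD : 1 - q ^ 2 <> 0) by (intro; nra).
  pose proof (slit_nz z hz).
  rewrite !RtoC_div by auto.
  assert (hD' : RtoC (1 - q ^ 2) <> RtoC 0) by (apply RtoC_nz; auto).
  set (D := RtoC (1 - q ^ 2)) in *. rewrite !RtoC_mult, !RtoC_plus, !RtoC_opp.
  field; repeat split; auto; try (apply RtoC_nz; auto).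
Qed.
End KRel.

Lemma exsR_ext (a b : nat -> R) : (forall n, a n = b n) -> ex_series a -> ex_series b.
Proof. intros E h. apply (@ex_series_ext R_AbsRing R_NormedModule a b E h). Qed.

Lemma exsR_le (a b : nat -> R) : (forall n, Rabs (a n) <= b n) -> ex_series b -> ex_series a.
Proof. intros E h. apply (@ex_series_le R_AbsRing R_CompleteNormedModule a b E h). Qed.

Lemma is_derive_sum (f df : nat -> R -> R) (x : R) (N : nat) :
  (forall k, is_derive (f k) x (df k x)) ->
  is_derive (fun y => sum_f_R0 (fun k => f k y) N) x (sum_f_R0 (fun k => df k x) N).
Proof.
  intro H. induction N as [|N IH]; simpl; auto.
  apply (is_derive_plus (fun y => sum_f_R0 (fun k => f k y) N) (f (S N))); auto.
Qed.

Lemma sum_quot (a b c : nat -> R) (h : R) (N : nat) : h <> 0 ->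
  sum_f_R0 (fun k => (a k - b k) / h - c k) N =
  (sum_f_R0 a N - sum_f_R0 b N) / h - sum_f_R0 c N.
Proof.
  intro hh. induction N as [|N IH]; simpl; auto. rewrite IH. field. auto.
Qed.

Lemma ex_series_shift (a : nat -> R) (n : nat) : ex_series a -> ex_series (fun k => a (n + k)%nat).
Proof. intro h. apply (proj1 (ex_series_incr_n a n)); auto. Qed.

Section SerDer.
Variables (f df : nat -> R -> R) (M : nat -> R) (x0 delta : R).
Hypotheses (hd : 0 < delta)
  (hder : forall k x, Rabs (x - x0) < delta -> is_derive (f k) x (df k x))
  (hbd : forall k x, Rabs (x - x0) < delta -> Rabs (df k x) <= M k)
  (hM : ex_series M)
  (hf0 : ex_series (fun k => f k x0)).

Lemma M_nonneg : forall k, 0 <= M k.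
Proof. intro k. eapply Rle_trans; [apply Rabs_pos| apply (hbd k x0)]. rewrite Rminus_diag, Rabs_R0. auto. Qed.

Lemma diff_bound (k : nat) (x : R) : Rabs (x - x0) < delta ->
  Rabs (f k x - f k x0) <= M k * Rabs (x - x0).
Proof.
  intro hx. apply (bounded_variation (f k) (df k)).
  intros t ht. split.
  - apply hder. lra.
  - apply hbd. lra.
Qed.

Lemma ex_series_at (x : R) : Rabs (x - x0) < delta -> ex_series (fun k => f k x).
Proof.
  intro hx.
  assert (ex_series (fun k => f k x - f k x0)).
  { apply ex_series_Rabs.
    apply (exsR_le (fun k => Rabs (f k x - f k x0)) (fun k => M k * Rabs (x - x0))).
    - intro k. rewrite Rabs_Rabsolu. apply diff_bound; auto.
    - apply (exsR_ext (fun k => Rabs (x - x0) * M k)). intro; ring.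
      apply exsR_scal; auto. }
  apply (exsR_ext (fun k => (f k x - f k x0) + f k x0)). intro; ring.
  apply exsR_plus; auto.
Qed.

Lemma ex_series_df : ex_series (fun k => df k x0).
Proof.
  apply ex_series_Rabs. apply (exsR_le _ M); auto.
  intro k. rewrite Rabs_Rabsolu. apply hbd. rewrite Rminus_diag, Rabs_R0; auto.
Qed.

Lemma series_is_derive :
  is_derive (fun x => Series (fun k => f k x)) x0 (Series (fun k => df k x0)).
Proof.
  apply is_derive_Reals. intros eps heps.
  pose proof (Series_correct _ hM) as HS. apply is_series_Reals in HS.
  destruct (HS (eps / 8)) as [N HN]; [lra|].
  assert (htail : Series (fun k => M (S N + k)%nat) < eps / 8).
  { specialize (HN N (le_n N)).
    rewrite (Series_incr_n M (S N)) in HN by (auto; lia). simpl pred in HN. unfold R_dist in HN.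
    set (T := Series (fun k => M (S N + k)%nat)) in *.
    replace (sum_f_R0 M N - (sum_f_R0 M N + T)) with (- T) in HN by ring.
    rewrite Rabs_Ropp in HN. pose proof (Rle_abs T). lra. }
  assert (hGN := is_derive_sum f df x0 N (fun k => hder k x0 ltac:(rewrite Rminus_diag, Rabs_R0; auto))).
  apply is_derive_Reals in hGN.
  destruct (hGN (eps / 2)) as [d1 hd1]; [lra|].
  assert (hd1p : 0 < d1) by (destruct d1; simpl; auto).
  exists (mkposreal (Rmin d1 delta) (Rmin_pos _ _ hd1p hd)).
  intros h hh0 hh. simpl in hh.
  assert (hhd : Rabs h < delta) by (eapply Rlt_le_trans; [exact hh| apply Rmin_r]).
  assert (hhd1 : Rabs h < d1) by (eapply Rlt_le_trans; [exact hh| apply Rmin_l]).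
  set (g := fun k => (f k (x0 + h) - f k x0) / h - df k x0).
  assert (hx : Rabs (x0 + h - x0) < delta) by (replace (x0 + h - x0) with h by ring; auto).
  assert (exh := ex_series_at (x0 + h) hx).
  assert (exdf := ex_series_df).
  assert (hgb : forall k, Rabs (g k) <= 2 * M k).
  { intro k. unfold g. 
    pose proof (diff_bound k (x0 + h) hx) as Hb. replace (x0 + h - x0) with h in Hb by ring.
    pose proof (hbd k x0 ltac:(rewrite Rminus_diag, Rabs_R0; auto)) as Hd.
    eapply Rle_trans; [apply Rabs_triang|]. rewrite Rabs_Ropp.
    unfold Rdiv. rewrite Rabs_mult, Rabs_inv.
    assert (0 < Rabs h) by (apply Rabs_pos_lt; auto).
    assert (Rabs (f k (x0 + h) - f k x0) * / Rabs h <= M k).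
    { apply (Rmult_le_reg_r (Rabs h)); auto. rewrite Rmult_assoc, Rinv_l by lra. lra. }
    lra. }
  assert (exg : ex_series g).
  { unfold g. apply exsR_minus; auto.
    apply (exsR_ext (fun k => / h * (f k (x0 + h) - f k x0))). intro; unfold Rdiv; ring.
    apply exsR_scal. apply exsR_minus; auto. }
  assert (exga : ex_series (fun k => Rabs (g k))).
  { apply (exsR_le _ (fun k => 2 * M k)). intro k. rewrite Rabs_Rabsolu. auto.
    apply exsR_scal; auto. }
  assert (Eq : (Series (fun k => f k (x0 + h)) - Series (fun k => f k x0)) / h
                 - Series (fun k => df k x0) = Series g).
  { unfold g. rewrite (Series_minus (fun k => (f k (x0 + h) - f k x0) / h) (fun k => df k x0)); auto.
    2:{ apply (exsR_ext (fun k => / h * (f k (x0 + h) - f k x0))). intro; unfold Rdiv; ring.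
        apply exsR_scal. apply exsR_minus; auto. }
    rewrite (Series_ext (fun k => (f k (x0 + h) - f k x0) / h) (fun k => / h * (f k (x0 + h) - f k x0)))
      by (intro; unfold Rdiv; ring).
    rewrite Series_scal_l, Series_minus by auto. unfold Rdiv. ring. }
  rewrite Eq.
  rewrite (Series_incr_n g (S N)) by (auto; lia). simpl pred.
  assert (Htl : Rabs (Series (fun k => g (S N + k)%nat)) <= 2 * Series (fun k => M (S N + k)%nat)).
  { eapply Rle_trans. apply Series_Rabs.
    apply (ex_series_shift (fun k => Rabs (g k))); auto.
    rewrite <- Series_scal_l. apply Series_le.
    - intro k. split; [apply Rabs_pos| apply hgb].
    - apply exsR_scal. apply ex_series_shift; auto. }
  assert (Hfin : Rabs (sum_f_R0 g N) < eps / 2).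
  { unfold g. rewrite sum_quot by auto.
    specialize (hd1 h hh0 hhd1). exact hd1. }
  eapply Rle_lt_trans; [apply Rabs_triang|]. lra.
Qed.
End SerDer.

Lemma isd_mult (f g : R -> R) (x df dg : R) : is_derive f x df -> is_derive g x dg ->
  is_derive (fun y => f y * g y) x (df * g x + f x * dg).
Proof. intros h1 h2. exact (is_derive_mult f g x df dg h1 h2 Rmult_comm). Qed.
Lemma isd_plus (f g : R -> R) (x df dg : R) : is_derive f x df -> is_derive g x dg ->
  is_derive (fun y => f y + g y) x (df + dg).
Proof. intros h1 h2. exact (is_derive_plus f g x df dg h1 h2). Qed.
Lemma isd_minus (f g : R -> R) (x df dg : R) : is_derive f x df -> is_derive g x dg ->
  is_derive (fun y => f y - g y) x (df - dg).
Proof. intros h1 h2. exact (is_derive_minus f g x df dg h1 h2). Qed.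
Lemma isd_opp (f : R -> R) (x df : R) : is_derive f x df ->
  is_derive (fun y => - f y) x (- df).
Proof. intros h1. exact (is_derive_opp f x df h1). Qed.
Lemma isd_const (c x : R) : is_derive (fun _ => c) x 0.
Proof. exact (is_derive_const c x). Qed.
Lemma isd_ext (f g : R -> R) (x d d' : R) : (forall y, f y = g y) -> d = d' -> is_derive f x d -> is_derive g x d'.
Proof. intros E Ed h. rewrite <- Ed. exact (is_derive_ext f g x d E h). Qed.
Lemma isd_Rpower (b x : R) : is_derive (fun y => Rpower b y) x (ln b * Rpower b x).
Proof. unfold Rpower. auto_derive; auto. ring. Qed.

Section QDer.
Variables (b : R).
Hypothesis hb : 0 < b < 1.

Definition Qn (x : R) (n : nat) := qPoch (Rpower b x) b n.

Fixpoint dQn (x : R) (n : nat) : R :=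
  match n with
  | O => 0
  | S n' => dQn x n' * (1 - Rpower b x * b ^ n') - Qn x n' * (ln b * Rpower b x * b ^ n')
  end.

Lemma Qn_derive (n : nat) (x : R) : is_derive (fun y => Qn y n) x (dQn x n).
Proof.
  induction n as [|n IH].
  - unfold Qn. simpl. apply isd_const.
  - unfold Qn. simpl. fold (Qn x n).
    apply (isd_ext (fun y => Qn y n * (1 - Rpower b y * b ^ n)) _ _
      (dQn x n * (1 - Rpower b x * b ^ n) + Qn x n * (0 - ln b * Rpower b x * b ^ n))).
    { intro y. reflexivity. } { ring. }
    apply (isd_mult (fun y => Qn y n) (fun y => 1 - Rpower b y * b ^ n)); auto.
    apply (isd_minus (fun _ => 1) (fun y => Rpower b y * b ^ n)). apply isd_const.
    apply (isd_ext (fun y => Rpower b y * b ^ n) _ _ (ln b * Rpower b x * b ^ n + Rpower b x * 0)).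
    { intro; reflexivity. } { ring. }
    apply (isd_mult (fun y => Rpower b y) (fun _ => b ^ n)). apply isd_Rpower. apply isd_const.
Qed.

Let lb := Rabs (ln b).
Let beta := Rpower b (1 / 4).

Lemma beta_props : 0 < beta < 1.
Proof. split. apply Rpower_pos. apply Rpower_b_lt1; lra. Qed.

Lemma Rpower_b_le (x : R) : 1 / 4 <= x -> 0 < Rpower b x <= beta.
Proof.
  intro hx. split. apply Rpower_pos. unfold beta, Rpower. apply exp_le_mono.
  assert (ln b < 0) by (rewrite <- ln_1; apply ln_increasing; lra). nra.
Qed.

Lemma Qn_bound (x : R) (n : nat) : 1 / 4 <= x -> 0 < Qn x n <= 1.
Proof.
  intro hx. pose proof (Rpower_b_le x hx). pose proof beta_props. unfold Qn. apply qPoch_range; lra.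
Qed.

Lemma dQn_bound (x : R) (n : nat) : 1 / 4 <= x -> Rabs (dQn x n) <= lb * beta * (1 - b ^ n) / (1 - b).
Proof.
  intro hx. pose proof (Rpower_b_le x hx) as Hp. pose proof beta_props.
  assert (hlb : 0 <= lb) by apply Rabs_pos.
  induction n as [|n IH].
  - simpl. rewrite Rabs_R0. right; field; lra.
  - simpl dQn. pose proof (Qn_bound x n hx).
    assert (0 < b ^ n <= 1) by (split; [apply pow_lt; lra| apply pow_le_one; lra]).
    assert (0 <= 1 - Rpower b x * b ^ n <= 1) by nra.
    eapply Rle_trans; [apply Rabs_triang|]. rewrite Rabs_Ropp, !Rabs_mult.
    rewrite (Rabs_pos_eq (1 - _)) by lra. rewrite (Rabs_pos_eq (Qn x n)) by lra.
    rewrite (Rabs_pos_eq (Rpower b x)) by lra. rewrite (Rabs_pos_eq (b ^ n)) by lra. fold lb.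
    assert (Rabs (dQn x n) * (1 - Rpower b x * b ^ n) <= lb * beta * (1 - b ^ n) / (1 - b)).
    { assert (0 <= Rabs (dQn x n)) by apply Rabs_pos. nra. }
    assert (Qn x n * (lb * Rpower b x * b ^ n) <= lb * beta * b ^ n).
    { assert (0 <= lb * Rpower b x * b ^ n) by (apply Rmult_le_pos; [apply Rmult_le_pos|]; lra).
      assert (lb * Rpower b x * b ^ n <= lb * beta * b ^ n).
      { apply Rmult_le_compat_r; [lra|]. apply Rmult_le_compat_l; lra. }
      nra. }
    replace (lb * beta * (1 - b ^ S n) / (1 - b)) with (lb * beta * (1 - b ^ n) / (1 - b) + lb * beta * b ^ n)
      by (simpl; field; lra).
    lra.
Qed.

Definition fQ (n : nat) (x : R) := - (Rpower b x * b ^ n * Qn x n).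
Definition dfQ (n : nat) (x : R) := - (ln b * Rpower b x * b ^ n * Qn x n + Rpower b x * b ^ n * dQn x n).
Let CQ := lb * beta + beta * (lb * beta / (1 - b)).

Lemma fQ_derive (n : nat) (x : R) : is_derive (fQ n) x (dfQ n x).
Proof.
  unfold fQ, dfQ. apply isd_opp.
  apply (isd_ext (fun y => (Rpower b y * b ^ n) * Qn y n) _ _
     ((ln b * Rpower b x * b ^ n + Rpower b x * 0) * Qn x n + Rpower b x * b ^ n * dQn x n)).
  { intro; reflexivity. } { ring. }
  apply (isd_mult (fun y => Rpower b y * b ^ n) (fun y => Qn y n)).
  apply (isd_mult (fun y => Rpower b y) (fun _ => b ^ n)). apply isd_Rpower. apply isd_const. apply Qn_derive.
Qed.

Lemma dfQ_bound (n : nat) (x : R) : 1 / 4 <= x -> Rabs (dfQ n x) <= CQ * b ^ n.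
Proof.
  intro hx. pose proof (Rpower_b_le x hx) as Hp. pose proof beta_props.
  pose proof (Qn_bound x n hx). pose proof (dQn_bound x n hx).
  assert (hlb : 0 <= lb) by apply Rabs_pos.
  assert (0 < b ^ n <= 1) by (split; [apply pow_lt; lra| apply pow_le_one; lra]).
  unfold dfQ, CQ. rewrite Rabs_Ropp. eapply Rle_trans; [apply Rabs_triang|].
  rewrite !Rabs_mult. fold lb.
  rewrite (Rabs_pos_eq (Qn x n)) by lra.
  rewrite (Rabs_pos_eq (Rpower b x)) by lra. rewrite (Rabs_pos_eq (b ^ n)) by lra.
  assert (lb * Rpower b x * b ^ n * Qn x n <= lb * beta * b ^ n).
  { assert (0 <= lb * Rpower b x * b ^ n) by (apply Rmult_le_pos; [apply Rmult_le_pos|]; lra).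
    assert (lb * Rpower b x * b ^ n <= lb * beta * b ^ n).
    { apply Rmult_le_compat_r; [lra|]. apply Rmult_le_compat_l; lra. }
    nra. }
  assert (Rabs (dQn x n) <= lb * beta / (1 - b)).
  { eapply Rle_trans; [eauto|]. unfold Rdiv. apply Rmult_le_compat_r. 
    apply Rlt_le, Rinv_0_lt_compat; lra.
    assert (0 <= lb * beta) by (apply Rmult_le_pos; lra). nra. }
  assert (0 <= Rabs (dQn x n)) by apply Rabs_pos.
  assert (Rpower b x * b ^ n * Rabs (dQn x n) <= beta * b ^ n * (lb * beta / (1 - b))).
  { apply Rmult_le_compat; try lra. apply Rmult_le_pos; lra. apply Rmult_le_compat_r; lra. }
  nra.
Qed.

Lemma Qf_series (x : R) : 0 < x -> Qf b x = 1 + Series (fun n => fQ n x).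
Proof.
  intro hx. destruct (Q_props b x hb hx) as [Hl _].
  assert (Htel : forall N, sum_f_R0 (fun n => fQ n x) N = Qn x (S N) - 1).
  { intro N. induction N as [|N IH].
    - unfold fQ, Qn. simpl. ring.
    - simpl sum_f_R0. rewrite IH. unfold fQ, Qn. simpl qPoch. rewrite <- !tech_pow_Rmult. ring. }
  assert (His : is_series (fun n => fQ n x) (Qf b x - 1)).
  { apply is_series_Reals. intros eps heps.
    apply is_lim_seq_spec in Hl. destruct (Hl (mkposreal eps heps)) as [N HN].
    exists N. intros n hn. unfold R_dist. rewrite Htel.
    replace (Qn x (S n) - 1 - (Qf b x - 1)) with (Qn x (S n) - Qf b x) by ring.
    apply (HN (S n)). lia. }
  rewrite (is_series_unique _ _ His). ring.
Qed.

Definition dQf (x : R) := Series (fun n => dfQ n x).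

Lemma Qf_derive (x0 : R) : 1 / 2 <= x0 -> is_derive (Qf b) x0 (dQf x0) /\ Rabs (dQf x0) <= CQ / (1 - b).
Proof.
  intro hx0.
  assert (hM : ex_series (fun n => CQ * b ^ n)).
  { apply exsR_scal. apply ex_series_geom. rewrite Rabs_pos_eq; lra. }
  assert (hf0 : ex_series (fun n => fQ n x0)).
  { apply (exsR_le _ (fun n => b ^ n)). 
    - intro n. unfold fQ. rewrite Rabs_Ropp, !Rabs_mult.
      pose proof (Rpower_b_le x0 ltac:(lra)). pose proof beta_props. pose proof (Qn_bound x0 n ltac:(lra)).
      assert (0 < b ^ n) by (apply pow_lt; lra).
      rewrite !Rabs_pos_eq by lra.
      assert (Rpower b x0 * b ^ n <= 1 * b ^ n) by (apply Rmult_le_compat_r; lra).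
      assert (0 < Rpower b x0 * b ^ n) by nra. nra.
    - apply ex_series_geom. rewrite Rabs_pos_eq; lra. }
  split.
  - apply (is_derive_ext_loc (fun x => 1 + Series (fun n => fQ n x))).
    { exists (mkposreal (1 / 4) ltac:(lra)). intros y hy. simpl in hy.
      unfold ball in hy. simpl in hy. unfold AbsRing_ball, abs, minus, plus, opp in hy. simpl in hy.
      rewrite Qf_series; auto. apply Rabs_def2 in hy. lra. }
    apply (isd_ext (fun x => 1 + Series (fun n => fQ n x)) _ _ (0 + dQf x0)).
    { intro; reflexivity. } { ring. }
    apply (isd_plus (fun _ => 1) (fun x => Series (fun n => fQ n x))). apply isd_const.
    apply (series_is_derive fQ dfQ (fun n => CQ * b ^ n) x0 (1 / 4)); auto; try lra.
    + intros k x _. apply fQ_derive.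
    + intros k x hx. apply dfQ_bound. apply Rabs_def2 in hx. lra.
  - unfold dQf. eapply Rle_trans. apply Series_Rabs.
    { apply (exsR_le _ (fun n => CQ * b ^ n)); auto. intro n. rewrite Rabs_Rabsolu. apply dfQ_bound; lra. }
    replace (CQ / (1 - b)) with (Series (fun n => CQ * b ^ n)).
    2:{ rewrite Series_scal_l, Series_geom. field; lra. rewrite Rabs_pos_eq; lra. }
    apply Series_le; auto. intro n. split; [apply Rabs_pos| apply dfQ_bound; lra].
Qed.
End QDer.

Lemma isd_shift (f : R -> R) (c x d : R) : is_derive f (x + c) d -> is_derive (fun y => f (y + c)) x d.
Proof.
  intro h. 
  assert (hg : is_derive (fun y : R => y + c) x 1).
  { apply (isd_ext (fun y => y + c) _ _ (1 + 0)). intro; auto. ring.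
    apply (isd_plus (fun y => y) (fun _ => c)). apply (is_derive_id x). apply isd_const. }
  pose proof (is_derive_comp f (fun y => y + c) x d 1 h hg) as H.
  apply (isd_ext _ _ _ _ _ (fun y => eq_refl) (Rmult_1_l d) H).
Qed.

Lemma inv_qGamma_eq (b x : R) : 0 < b < 1 -> 0 < x ->
  / qGamma b x = Qf b x / Qf b 1 * Rpower (1 - b) (x - 1).
Proof.
  intros hb hx. unfold qGamma.
  destruct (Q_props b 1 hb ltac:(lra)) as [_ H1].
  destruct (Q_props b x hb hx) as [_ H2].
  unfold Qf in *. rewrite Rpower_1 in * by lra.
  replace (x - 1) with (- (1 - x)) by ring. rewrite Rpower_Ropp.
  pose proof (Rpower_pos (1 - b) (1 - x)).
  field. repeat split; lra.
Qed.

Lemma exp_INR_mult (k : nat) (x : R) : exp (INR k * x) = exp x ^ k.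
Proof.
  induction k as [|k IH]. simpl. rewrite Rmult_0_l. apply exp_0.
  rewrite S_INR. replace ((INR k + 1) * x) with (INR k * x + x) by ring.
  rewrite exp_plus, IH. simpl. ring.
Qed.

Lemma dQf_bounded (b : R) : 0 < b < 1 -> exists C, 0 <= C /\ forall x, 1 / 2 <= x -> Rabs (dQf b x) <= C.
Proof.
  intro hb. eexists. split; [|intros x hx; apply (proj2 (Qf_derive b hb x hx))].
  apply Rmult_le_pos; [|apply Rlt_le, Rinv_0_lt_compat; lra].
  pose proof (Rpower_pos b (1/4)). pose proof (Rabs_pos (ln b)).
  apply Rplus_le_le_0_compat. apply Rmult_le_pos; lra.
  apply Rmult_le_pos; [lra|]. apply Rmult_le_pos; [apply Rmult_le_pos; lra|].
  apply Rlt_le, Rinv_0_lt_compat; lra.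
Qed.

Section ISer.
Variables (q : R) (w : C).
Hypotheses (hq : 0 < q < 1) (hw : slit w).
Let b := q ^ 2.
Let r := Cmod (Cdiv w (RtoC 2)).
Let th := Carg (Cdiv w (RtoC 2)).
Let Q1 := Qf b 1.
Lemma hbI : 0 < b < 1. Proof. unfold b; split; nra. Qed.
Lemma hrI : 0 < r. Proof. apply (slit_props _ (slit_div2 w hw)). Qed.
Lemma hQ1 : 0 < Q1. Proof. apply (Q_props b 1 hbI ltac:(lra)). Qed.

Definition ak (k : nat) := (1 - b) ^ k / (qPoch b b k * Q1).
Definition al (k : nat) := INR k * ln q + ln (1 - b) + ln r.
Definition L0 (k : nat) := INR k * INR k * ln q + INR k * ln (1 - b) + 2 * INR k * ln r.
Definition Ek (k : nat) (mu : R) := exp (L0 k + mu * al k).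

Lemma Ek_eq (k : nat) (mu : R) :
  Rpower q (INR k * (mu + INR k)) * Rpower (1 - b) (mu + INR k) * Rpower r (mu + 2 * INR k) = Ek k mu.
Proof. unfold Rpower, Ek, L0, al. rewrite <- !exp_plus. f_equal. ring. Qed.

Definition fR (k : nat) (mu : R) := ak k * Ek k mu * Qf b (mu + INR k + 1) * cos ((mu + 2 * INR k) * th).
Definition fI (k : nat) (mu : R) := ak k * Ek k mu * Qf b (mu + INR k + 1) * sin ((mu + 2 * INR k) * th).

Lemma term_eq (k : nat) (mu : R) : 0 < mu + INR k + 1 ->
  Re (I3_term q mu w k) = fR k mu /\ Im (I3_term q mu w k) = fI k mu.
Proof.
  intro hx.
  assert (Ec : coef q mu k * Rpower r (mu + 2 * INR k) = ak k * Ek k mu * Qf b (mu + INR k + 1)).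
  { unfold coef. fold b. unfold Rdiv at 1. rewrite Rinv_mult, (inv_qGamma_eq b) by (auto; apply hbI).
    replace (mu + INR k + 1 - 1) with (mu + INR k) by ring.
    rewrite <- Ek_eq. unfold ak. fold Q1.
    pose proof hQ1. assert (0 < qPoch b b k) by (pose proof hbI; apply qPoch_range; lra).
    set (A := (1 - b) ^ k). set (P := qPoch b b k). set (Q := Qf b (mu + INR k + 1)).
    set (X1 := Rpower q (INR k * (mu + INR k))). set (X2 := Rpower (1 - b) (mu + INR k)).
    set (X3 := Rpower r (mu + 2 * INR k)).
    field. split; [lra| unfold P; lra]. }
  rewrite I3_term_coef. unfold Cpowr. fold r th. unfold fR, fI.
  split; unfold Re, Im, Cmult, RtoC; cbn [fst snd]; rewrite <- Ec; ring.
Qed.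

Definition dfR (k : nat) (mu : R) :=
  ak k * (al k * Ek k mu * Qf b (mu + INR k + 1) * cos ((mu + 2 * INR k) * th)
          + Ek k mu * dQf b (mu + INR k + 1) * cos ((mu + 2 * INR k) * th)
          - Ek k mu * Qf b (mu + INR k + 1) * (th * sin ((mu + 2 * INR k) * th))).
Definition dfI (k : nat) (mu : R) :=
  ak k * (al k * Ek k mu * Qf b (mu + INR k + 1) * sin ((mu + 2 * INR k) * th)
          + Ek k mu * dQf b (mu + INR k + 1) * sin ((mu + 2 * INR k) * th)
          + Ek k mu * Qf b (mu + INR k + 1) * (th * cos ((mu + 2 * INR k) * th))).

Lemma Ek_derive (k : nat) (mu : R) : is_derive (Ek k) mu (al k * Ek k mu).
Proof. unfold Ek. auto_derive; auto. ring. Qed.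

Lemma Qsh_derive (k : nat) (mu : R) : Rabs mu < 1 / 2 ->
  is_derive (fun y => Qf b (y + INR k + 1)) mu (dQf b (mu + INR k + 1)).
Proof.
  intro h. apply Rabs_def2 in h. pose proof (pos_INR k).
  apply (isd_ext (fun y => Qf b (y + (INR k + 1))) _ _ (dQf b (mu + (INR k + 1)))).
  { intro; f_equal; ring. } { f_equal; ring. }
  apply (isd_shift (Qf b)). apply Qf_derive. apply hbI. lra.
Qed.

Lemma fR_derive (k : nat) (mu : R) : Rabs mu < 1 / 2 -> is_derive (fR k) mu (dfR k mu).
Proof.
  intro h. unfold fR, dfR.
  set (c := fun y => cos ((y + 2 * INR k) * th)).
  assert (hc : is_derive c mu (- (th * sin ((mu + 2 * INR k) * th)))).
  { unfold c. auto_derive; auto. ring. }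
  pose proof (Ek_derive k mu) as hE. pose proof (Qsh_derive k mu h) as hQ.
  apply (isd_ext (fun y => ak k * ((Ek k y * Qf b (y + INR k + 1)) * c y)) _ _
     (ak k * (((al k * Ek k mu) * Qf b (mu + INR k + 1) + Ek k mu * dQf b (mu + INR k + 1)) * c mu
        + (Ek k mu * Qf b (mu + INR k + 1)) * (- (th * sin ((mu + 2 * INR k) * th)))))).
  { intro; unfold c; ring. } { unfold c; ring. }
  apply is_derive_scal.
  apply (isd_mult (fun y => Ek k y * Qf b (y + INR k + 1)) c); auto.
  apply (isd_mult (Ek k) (fun y => Qf b (y + INR k + 1))); auto.
Qed.

Lemma fI_derive (k : nat) (mu : R) : Rabs mu < 1 / 2 -> is_derive (fI k) mu (dfI k mu).
Proof.
  intro h. unfold fI, dfI.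
  set (c := fun y => sin ((y + 2 * INR k) * th)).
  assert (hc : is_derive c mu (th * cos ((mu + 2 * INR k) * th))).
  { unfold c. auto_derive; auto. ring. }
  pose proof (Ek_derive k mu) as hE. pose proof (Qsh_derive k mu h) as hQ.
  apply (isd_ext (fun y => ak k * ((Ek k y * Qf b (y + INR k + 1)) * c y)) _ _
     (ak k * (((al k * Ek k mu) * Qf b (mu + INR k + 1) + Ek k mu * dQf b (mu + INR k + 1)) * c mu
        + (Ek k mu * Qf b (mu + INR k + 1)) * (th * cos ((mu + 2 * INR k) * th))))).
  { intro; unfold c; ring. } { unfold c; ring. }
  apply is_derive_scal.
  apply (isd_mult (fun y => Ek k y * Qf b (y + INR k + 1)) c); auto.
  apply (isd_mult (Ek k) (fun y => Qf b (y + INR k + 1))); auto.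
Qed.
Lemma ak_bound (k : nat) : 0 < ak k <= / Q1.
Proof.
  unfold ak. pose proof hQ1. pose proof hbI.
  assert (0 < qPoch b b k) by (apply qPoch_range; lra).
  assert (HP := qPoch_ge b k hbI).
  assert (0 < (1 - b) ^ k) by (apply pow_lt; lra).
  split. apply Rdiv_lt_0_compat; [lra| apply Rmult_lt_0_compat; lra].
  unfold Rdiv. rewrite Rinv_mult.
  replace (/ Q1) with (1 * / Q1) at 2 by ring.
  rewrite <- Rmult_assoc. apply Rmult_le_compat_r. apply Rlt_le, Rinv_0_lt_compat; lra.
  apply (Rmult_le_reg_r (qPoch b b k)); auto. rewrite Rmult_assoc, Rinv_l by lra. lra.
Qed.

Let lam := Rabs (ln q).
Let bet := Rabs (ln (1 - b)) + Rabs (ln r).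

Lemma al_bound (k : nat) : Rabs (al k) <= INR k * lam + bet.
Proof.
  unfold al, lam, bet. pose proof (pos_INR k).
  eapply Rle_trans; [apply Rabs_triang|]. 
  eapply Rle_trans; [apply Rplus_le_compat_r, Rabs_triang|].
  rewrite Rabs_mult, Rabs_pos_eq by lra. lra.
Qed.

Lemma Ek_bound (k : nat) (mu : R) : Rabs mu < 1 / 2 ->
  0 < Ek k mu <= exp (bet / 2) * (q ^ (k * k) * (r ^ 2 * exp (lam / 2)) ^ k).
Proof.
  intro hmu. split. apply exp_pos.
  unfold Ek. rewrite exp_plus.
  assert (E0 : exp (L0 k) = q ^ (k * k) * (1 - b) ^ k * (r ^ 2) ^ k).
  { pose proof (Ek_eq k 0) as H. unfold Ek in H. rewrite Rmult_0_l, Rplus_0_r in H.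
    rewrite <- H. rewrite !Rplus_0_l. 
    rewrite <- mult_INR, Rpower_pow by lra. rewrite Rpower_pow by (pose proof hbI; lra).
    replace (2 * INR k) with (INR (2 * k)) by (rewrite mult_INR; simpl; ring).
    rewrite Rpower_pow by apply hrI. rewrite (pow_mult r 2 k). reflexivity. }
  rewrite E0.
  assert (h1 : exp (mu * al k) <= exp (bet / 2) * exp (lam / 2) ^ k).
  { rewrite <- exp_INR_mult, <- exp_plus. apply exp_le_mono.
    pose proof (al_bound k). 
    assert (mu * al k <= Rabs mu * Rabs (al k)) by (rewrite <- Rabs_mult; apply Rle_abs).
    assert (Rabs mu * Rabs (al k) <= 1 / 2 * Rabs (al k)) by (apply Rmult_le_compat_r; [apply Rabs_pos| lra]).
    lra. }
  assert (0 < q ^ (k * k)) by (apply pow_lt; lra).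
  assert (0 < (r ^ 2) ^ k) by (apply pow_lt; pose proof hrI; nra).
  assert (0 < (1 - b) ^ k <= 1) by (pose proof hbI; split; [apply pow_lt; lra| apply pow_le_one; lra]).
  rewrite Rpow_mult_distr.
  assert (q ^ (k * k) * (1 - b) ^ k * (r ^ 2) ^ k <= q ^ (k * k) * (r ^ 2) ^ k).
  { replace (q ^ (k * k) * (1 - b) ^ k * (r ^ 2) ^ k) with ((q ^ (k * k) * (r ^ 2) ^ k) * (1 - b) ^ k) by ring.
    rewrite <- (Rmult_1_r (q ^ (k * k) * (r ^ 2) ^ k)) at 2.
    apply Rmult_le_compat_l; [apply Rlt_le, Rmult_lt_0_compat| ]; lra. }
  assert (0 < q ^ (k * k) * (1 - b) ^ k * (r ^ 2) ^ k)
    by (apply Rmult_lt_0_compat; [apply Rmult_lt_0_compat|]; lra).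
  pose proof (exp_pos (mu * al k)).
  apply Rle_trans with (q ^ (k * k) * (r ^ 2) ^ k * (exp (bet / 2) * exp (lam / 2) ^ k)).
  apply Rmult_le_compat; lra.
  right. ring.
Qed.

Lemma df_bounds : exists M : nat -> R, ex_series M /\
  forall k mu, Rabs mu < 1 / 2 -> Rabs (dfR k mu) <= M k /\ Rabs (dfI k mu) <= M k.
Proof.
  destruct (dQf_bounded b hbI) as [C [hC0 hC]].
  set (K1 := exp (bet / 2) * / Q1 * (lam + bet + C + Rabs th)).
  exists (fun k => K1 * ((INR k + 1) * q ^ (k * k) * (r ^ 2 * exp (lam / 2)) ^ k)).
  split.
  { apply exsR_scal. apply ex_series_gauss; auto. pose proof hrI. pose proof (exp_pos (lam / 2)).
    apply Rmult_lt_0_compat; nra. }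
  intros k mu hmu.
  pose proof (ak_bound k) as Ha. pose proof (Ek_bound k mu hmu) as HE.
  apply Rabs_def2 in hmu as hmu'.
  assert (HQ : 0 < Qf b (mu + INR k + 1) <= 1).
  { pose proof (pos_INR k). apply Q_props. apply hbI. lra. }
  assert (HdQ : Rabs (dQf b (mu + INR k + 1)) <= C) by (apply hC; pose proof (pos_INR k); lra).
  pose proof (al_bound k) as Hal.
  assert (hlam : 0 <= lam) by apply Rabs_pos.
  assert (hbet : 0 <= bet) by (unfold bet; pose proof (Rabs_pos (ln (1 - b))); pose proof (Rabs_pos (ln r)); lra).
  pose proof (pos_INR k).
  set (c := cos ((mu + 2 * INR k) * th)). set (s := sin ((mu + 2 * INR k) * th)).
  assert (Hc : Rabs c <= 1) by (unfold c; apply Rabs_le; split; apply COS_bound).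
  assert (Hs : Rabs s <= 1) by (unfold s; apply Rabs_le; split; apply SIN_bound).
  set (Q := Qf b (mu + INR k + 1)) in *. set (dQ := dQf b (mu + INR k + 1)) in *.
  assert (HT : forall u v : R, Rabs u <= 1 -> Rabs v <= 1 ->
     Rabs (al k * Q * u) + Rabs (dQ * u) + Rabs (Q * (th * v)) <= INR k * lam + bet + C + Rabs th).
  { intros u v hu hv. rewrite !Rabs_mult. rewrite (Rabs_pos_eq Q) by lra.
    assert (0 <= Rabs u) by apply Rabs_pos. assert (0 <= Rabs v) by apply Rabs_pos.
    assert (0 <= Rabs (al k)) by apply Rabs_pos. assert (0 <= Rabs dQ) by apply Rabs_pos.
    assert (0 <= Rabs th) by apply Rabs_pos.
    assert (Rabs (al k) * Q * Rabs u <= Rabs (al k)).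
    { rewrite Rmult_assoc. rewrite <- (Rmult_1_r (Rabs (al k))) at 2. apply Rmult_le_compat_l; nra. }
    assert (Rabs dQ * Rabs u <= C) by nra.
    assert (Q * (Rabs th * Rabs v) <= Rabs th).
    { assert (Rabs th * Rabs v <= Rabs th) by nra. nra. }
    lra. }
  set (X := ak k * Ek k mu).
  assert (HX : 0 < X <= exp (bet / 2) * (q ^ (k * k) * (r ^ 2 * exp (lam / 2)) ^ k) * / Q1).
  { unfold X. split. apply Rmult_lt_0_compat; lra.
    rewrite Rmult_comm. apply Rmult_le_compat; lra. }
  assert (HB : INR k * lam + bet + C + Rabs th <= (INR k + 1) * (lam + bet + C + Rabs th)).
  { pose proof (Rabs_pos th). nra. }
  assert (Hfin : forall T, Rabs T <= INR k * lam + bet + C + Rabs th -> Rabs (X * T) <=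
      K1 * ((INR k + 1) * q ^ (k * k) * (r ^ 2 * exp (lam / 2)) ^ k)).
  { intros T hT. rewrite Rabs_mult, Rabs_pos_eq by lra.
    apply Rle_trans with (exp (bet / 2) * (q ^ (k * k) * (r ^ 2 * exp (lam / 2)) ^ k) * / Q1 *
                          ((INR k + 1) * (lam + bet + C + Rabs th))).
    - apply Rmult_le_compat; try lra. apply Rabs_pos.
    - right. unfold K1. ring. }
  split.
  - replace (dfR k mu) with (X * (al k * Q * c + dQ * c - Q * (th * s))) by (unfold dfR, X, Q, dQ, c, s; ring).
    apply Hfin. eapply Rle_trans; [|apply (HT c s Hc Hs)].
    unfold Rminus. eapply Rle_trans; [apply Rabs_triang|]. rewrite Rabs_Ropp.
    apply Rplus_le_compat_r. apply Rabs_triang.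
  - replace (dfI k mu) with (X * (al k * Q * s + dQ * s + Q * (th * c))) by (unfold dfI, X, Q, dQ, c, s; ring).
    apply Hfin. eapply Rle_trans; [|apply (HT s c Hs Hc)].
    eapply Rle_trans; [apply Rabs_triang|].
    apply Rplus_le_compat_r. apply Rabs_triang.
Qed.
End ISer.

Definition ee (k : nat) : R := / (INR k + 1).

Lemma ee_pos (k : nat) : 0 < ee k.
Proof. unfold ee. apply Rinv_0_lt_compat. pose proof (pos_INR k). lra. Qed.
Lemma ee_le1 (k : nat) : ee k <= 1.
Proof.
  unfold ee. pose proof (pos_INR k). rewrite <- Rinv_1. apply Rinv_le_contravar; lra.
Qed.
Lemma ee_lim : is_lim_seq ee 0.
Proof.
  unfold ee. replace (Finite 0) with (Rbar_inv p_infty) by reflexivity.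
  apply is_lim_seq_inv; [|discriminate].
  replace p_infty with (Rbar_plus p_infty 1) by reflexivity.
  apply (is_lim_seq_plus _ _ p_infty 1). apply is_lim_seq_INR. apply is_lim_seq_const.
  reflexivity.
Qed.
Lemma ee_lt1 (k : nat) : (1 <= k)%nat -> ee k < 1.
Proof.
  intro hk. unfold ee. apply le_INR in hk. simpl in hk. rewrite <- Rinv_1.
  apply Rinv_lt_contravar; lra.
Qed.

Lemma deriv_seq (f : R -> R) (x0 d : R) (s : nat -> R) :
  is_derive f x0 d -> is_lim_seq s 0 -> (forall k, s k <> 0) ->
  is_lim_seq (fun k => (f (x0 + s k) - f x0) / s k) d.
Proof.
  intros hd hs hnz. apply is_derive_Reals in hd.
  apply is_lim_seq_spec. intros eps.
  destruct (hd eps (cond_pos eps)) as [del hdel].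
  apply is_lim_seq_spec in hs. destruct (hs del) as [N HN].
  exists N. intros n hn. apply hdel; auto. specialize (HN n hn). rewrite Rminus_0_r in HN. auto.
Qed.

Lemma deriv_cont_seq (f : R -> R) (x0 d : R) (s : nat -> R) :
  is_derive f x0 d -> is_lim_seq s 0 -> (forall k, s k <> 0) ->
  is_lim_seq (fun k => f (x0 + s k)) (f x0).
Proof.
  intros hd hs hnz.
  assert (H : is_lim_seq (fun k => f x0 + s k * ((f (x0 + s k) - f x0) / s k)) (f x0 + 0 * d)).
  { apply is_lim_seq_plus'. apply is_lim_seq_const.
    apply is_lim_seq_mult'; auto. apply deriv_seq; auto. }
  rewrite Rmult_0_l, Rplus_0_r in H. eapply is_lim_seq_ext; [|exact H].
  intro k. simpl. field. auto.
Qed.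

Lemma ee_nz (k : nat) : ee k <> 0. Proof. pose proof (ee_pos k). lra. Qed.
Lemma mee_lim : is_lim_seq (fun k => - ee k) 0.
Proof.
  replace (Finite 0) with (Rbar_opp 0) by (simpl; f_equal; ring).
  apply (is_lim_seq_opp ee 0). apply ee_lim.
Qed.
Lemma mee_nz (k : nat) : - ee k <> 0. Proof. pose proof (ee_pos k). lra. Qed.

Lemma symdiff_lim (f : R -> R) (d : R) : is_derive f 0 d ->
  is_lim_seq (fun k => (f (- ee k) - f (ee k)) / ee k) (- 2 * d).
Proof.
  intro hd.
  apply (is_lim_seq_ext (fun k => - ((f (0 + - ee k) - f 0) / (- ee k)) - (f (0 + ee k) - f 0) / ee k)).
  { intro k. rewrite !Rplus_0_l. field. apply ee_nz. }
  replace (- 2 * d) with (- d - d) by ring.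
  apply is_lim_seq_minus'.
  - pose proof (deriv_seq f 0 d (fun k => - ee k) hd mee_lim mee_nz) as H1.
    apply (is_lim_seq_opp _ d) in H1. exact H1.
  - apply deriv_seq; auto. apply ee_lim. apply ee_nz.
Qed.

Definition Ccv (u : nat -> C) (L : C) :=
  is_lim_seq (fun k => Re (u k)) (Re L) /\ is_lim_seq (fun k => Im (u k)) (Im L).

Lemma Ccv_ext (u v : nat -> C) (L : C) : (forall k, (1 <= k)%nat -> u k = v k) -> Ccv u L -> Ccv v L.
Proof.
  intros E [h1 h2].
  assert (E' : forall k, u (S k) = v (S k)) by (intro k; apply E; lia).
  split; apply is_lim_seq_incr_1; [apply is_lim_seq_incr_1 in h1| apply is_lim_seq_incr_1 in h2];
  (eapply is_lim_seq_ext; [|eassumption]); intro k; simpl; rewrite E'; auto.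
Qed.

Lemma Ccv_unique (u : nat -> C) (L1 L2 : C) : Ccv u L1 -> Ccv u L2 -> L1 = L2.
Proof.
  intros [h1 h2] [h3 h4].
  apply is_lim_seq_unique in h1, h2, h3, h4.
  apply injective_projections.
  - change (Re L1 = Re L2). rewrite h3 in h1. injection h1. auto.
  - change (Im L1 = Im L2). rewrite h4 in h2. injection h2. auto.
Qed.

Lemma Ccv_plus (u v : nat -> C) (L1 L2 : C) : Ccv u L1 -> Ccv v L2 ->
  Ccv (fun k => Cplus (u k) (v k)) (Cplus L1 L2).
Proof.
  intros [h1 h2] [h3 h4]. split; simpl.
  apply (is_lim_seq_plus' (fun k => Re (u k)) (fun k => Re (v k))); auto.
  apply (is_lim_seq_plus' (fun k => Im (u k)) (fun k => Im (v k))); auto.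
Qed.

Lemma Ccv_minus (u v : nat -> C) (L1 L2 : C) : Ccv u L1 -> Ccv v L2 ->
  Ccv (fun k => Cminus (u k) (v k)) (Cminus L1 L2).
Proof.
  intros [h1 h2] [h3 h4]. split; simpl.
  apply (is_lim_seq_minus' (fun k => Re (u k)) (fun k => Re (v k))); auto.
  apply (is_lim_seq_minus' (fun k => Im (u k)) (fun k => Im (v k))); auto.
Qed.

Lemma Ccv_mult (u v : nat -> C) (L1 L2 : C) : Ccv u L1 -> Ccv v L2 ->
  Ccv (fun k => Cmult (u k) (v k)) (Cmult L1 L2).
Proof.
  intros [h1 h2] [h3 h4]. split; simpl.
  - apply (is_lim_seq_minus' (fun k => fst (u k) * fst (v k)) (fun k => snd (u k) * snd (v k)));
    apply is_lim_seq_mult'; auto.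
  - apply (is_lim_seq_plus' (fun k => fst (u k) * snd (v k)) (fun k => snd (u k) * fst (v k)));
    apply is_lim_seq_mult'; auto.
Qed.

Lemma Ccv_const (c : C) : Ccv (fun _ => c) c.
Proof. split; apply is_lim_seq_const. Qed.

Lemma Ccv_RtoC (u : nat -> R) (l : R) : is_lim_seq u l -> Ccv (fun k => RtoC (u k)) (RtoC l).
Proof. intro h. split; simpl; auto. apply is_lim_seq_const. Qed.

Lemma K3_int (q m : R) (w L : C) : is_integer m ->
  Ccv (fun k => K3_nonint q (m + ee k) w) L -> K3 q m w = L.
Proof.
  intros hm [h1 h2]. unfold K3.
  destruct (excluded_middle_informative (is_integer m)) as [_|hn]; [|contradiction].
  unfold Lim. simpl Rbar_loc_seq. fold (ee 0).
  change (fun n : nat => Re (K3_nonint q (m + / (INR n + 1)) w)) with (fun n => Re (K3_nonint q (m + ee n) w)).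
  change (fun n : nat => Im (K3_nonint q (m + / (INR n + 1)) w)) with (fun n => Im (K3_nonint q (m + ee n) w)).
  rewrite (is_lim_seq_unique _ _ h1), (is_lim_seq_unique _ _ h2). simpl.
  destruct L; reflexivity.
Qed.

Lemma I_derive0 (q : R) (w : C) : 0 < q < 1 -> slit w ->
  exists dR dI, is_derive (fun mu => Re (I3 q mu w)) 0 dR /\ is_derive (fun mu => Im (I3 q mu w)) 0 dI.
Proof.
  intros hq hw.
  destruct (df_bounds q w hq hw) as [M [hM hbd]].
  destruct (cex_I3 q 0 w hq hw) as [hre him].
  assert (hloc : forall mu, Rabs mu < 1 / 2 ->
            Re (I3 q mu w) = Series (fun k => fR q w k mu) /\ Im (I3 q mu w) = Series (fun k => fI q w k mu)).
  { intros mu hmu. apply Rabs_def2 in hmu. split; rewrite I3_CS; unfold CS; simpl; apply Series_ext;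
    intro k; pose proof (pos_INR k); apply term_eq; auto; lra. }
  assert (hlocb : locally 0 (fun mu => Rabs mu < 1 / 2)).
  { exists (mkposreal (1 / 2) ltac:(lra)). intros y hy. simpl in hy.
    unfold ball in hy. simpl in hy. unfold AbsRing_ball, abs, minus, plus, opp in hy. simpl in hy.
    rewrite Ropp_0, Rplus_0_r in hy. auto. }
  exists (Series (fun k => dfR q w k 0)), (Series (fun k => dfI q w k 0)). split.
  - apply (is_derive_ext_loc (fun mu => Series (fun k => fR q w k mu))).
    { eapply filter_imp; [|exact hlocb]. intros mu hmu. symmetry. apply hloc; auto. }
    apply (series_is_derive (fR q w) (dfR q w) M 0 (1 / 2)); auto; try lra.
    + intros k x hx. rewrite Rminus_0_r in hx. apply fR_derive; auto.
    + intros k x hx. rewrite Rminus_0_r in hx. apply hbd; auto.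
    + eapply exsR_ext; [|exact hre]. intro k. simpl. apply term_eq; auto. pose proof (pos_INR k); lra.
  - apply (is_derive_ext_loc (fun mu => Series (fun k => fI q w k mu))).
    { eapply filter_imp; [|exact hlocb]. intros mu hmu. symmetry. apply hloc; auto. }
    apply (series_is_derive (fI q w) (dfI q w) M 0 (1 / 2)); auto; try lra.
    + intros k x hx. rewrite Rminus_0_r in hx. apply fI_derive; auto.
    + intros k x hx. rewrite Rminus_0_r in hx. apply hbd; auto.
    + eapply exsR_ext; [|exact him]. intro k. simpl. apply term_eq; auto. pose proof (pos_INR k); lra.
Qed.

Lemma qGamma_derive1 (b : R) : 0 < b < 1 -> exists d, is_derive (qGamma b) 1 d.
Proof.
  intro hb. destruct (Qf_derive b hb 1 ltac:(lra)) as [hQ _].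
  destruct (Q_props b 1 hb ltac:(lra)) as [_ hQ1].
  set (Q1 := qPochInf b b).
  assert (E : forall x, qGamma b x = Q1 * (/ Qf b x) * Rpower (1 - b) (1 - x)).
  { intro x. unfold qGamma, Qf, Q1. unfold Rdiv. ring. }
  eexists. eapply isd_ext. intro x. symmetry. apply E. reflexivity.
  apply (isd_mult (fun x => Q1 * / Qf b x) (fun x => Rpower (1 - b) (1 - x))).
  - apply is_derive_scal. apply is_derive_inv. exact hQ. lra.
  - unfold Rpower. auto_derive. auto. reflexivity.
Qed.

Lemma Re_Kn (q eps : R) (w : C) :
  Re (K3_nonint q eps w) = Aq q eps * (Re (I3 q (- eps) w) - Re (I3 q eps w)) /\
  Im (K3_nonint q eps w) = Aq q eps * (Im (I3 q (- eps) w) - Im (I3 q eps w)).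
Proof.
  rewrite K3_nonint_A. destruct (I3 q (- eps) w), (I3 q eps w). unfold Re, Im, RtoC, Cmult, Cminus, Cplus, Copp.
  simpl. split; ring.
Qed.

Lemma conv0 (q : R) (w : C) : 0 < q < 1 -> slit w ->
  exists L, Ccv (fun k => K3_nonint q (0 + ee k) w) L.
Proof.
  intros hq hw. set (b := q ^ 2). assert (hb : 0 < b < 1) by (unfold b; split; nra).
  destruct (I_derive0 q w hq hw) as [dR [dI [hR hI]]].
  destruct (qGamma_derive1 b hb) as [dG hG].
  set (F := fun k => / 2 * Rpower q (- ee k ^ 2 + ee k) * qGamma b (1 + ee k) * qGamma b (1 + - ee k)
                     * ((1 - b) * / ((1 - Rpower b (0 + ee k)) / ee k))).
  assert (hF : forall k, Aq q (0 + ee k) = F k * / ee k).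
  { intro k. unfold Aq, F. rewrite Rplus_0_l. fold b.
    pose proof (ee_pos k).
    assert (hne : Rpower b (ee k) <> 1) by (apply Rpower_neq1; auto; lra).
    assert (EG : qGamma b (ee k) = qGamma b (ee k + 1) * (1 - b) / (1 - Rpower b (ee k))).
    { rewrite qGamma_rec by (auto; lra). field. split; lra. }
    rewrite EG. replace (1 + ee k) with (ee k + 1) by ring. replace (1 + - ee k) with (1 - ee k) by ring.
    field. repeat split; lra. }
  assert (hFl : is_lim_seq F (/ 2 * Rpower q (- 0 ^ 2 + 0) * qGamma b 1 * qGamma b 1
                     * ((1 - b) * / (- (ln b * Rpower b 0))))).
  { unfold F. apply is_lim_seq_mult'; [apply is_lim_seq_mult'; [apply is_lim_seq_mult'; [apply is_lim_seq_mult'|]|]|].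
    - apply is_lim_seq_const.
    - assert (hd : is_derive (fun x => Rpower q (- x ^ 2 + x)) 0 (ln q)).
      { unfold Rpower. auto_derive; auto. replace ((- (0 * (0 * 1)) + 0) * ln q) with 0 by ring.
        rewrite exp_0. ring. }
      pose proof (deriv_cont_seq _ _ _ ee hd ee_lim ee_nz) as H.
      eapply is_lim_seq_ext; [|exact H]. intro k. cbv beta. rewrite Rplus_0_l. reflexivity.
    - pose proof (deriv_cont_seq (qGamma b) 1 dG ee hG ee_lim ee_nz) as H0.
      eapply is_lim_seq_ext; [|exact H0]. intro k. reflexivity.
    - pose proof (deriv_cont_seq (qGamma b) 1 dG (fun k => - ee k) hG mee_lim mee_nz) as H0.
      eapply is_lim_seq_ext; [|exact H0]. intro k. reflexivity.
    - apply is_lim_seq_mult'. apply is_lim_seq_const.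
      replace (Finite (/ - (ln b * Rpower b 0))) with (Rbar_inv (- (ln b * Rpower b 0))) by reflexivity.
      apply is_lim_seq_inv.
      + pose proof (deriv_seq (fun x => Rpower b x) 0 (ln b * Rpower b 0) ee (isd_Rpower b 0) ee_lim ee_nz) as H.
        apply (is_lim_seq_opp _ (ln b * Rpower b 0)) in H.
        eapply is_lim_seq_ext; [|exact H]. intro k. simpl. rewrite Rpower_O by lra. field. apply ee_nz.
      + rewrite Rpower_O by lra. assert (ln b < 0) by (rewrite <- ln_1; apply ln_increasing; lra).
        intro E. injection E. lra. }
  set (AL := / 2 * Rpower q (- 0 ^ 2 + 0) * qGamma b 1 * qGamma b 1 * ((1 - b) * / (- (ln b * Rpower b 0)))) in *.
  exists (RtoC (AL * (- 2 * dR)) + Ci * RtoC (AL * (- 2 * dI)))%C.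
  split.
  - eapply is_lim_seq_ext.
    { intro k. symmetry. rewrite (proj1 (Re_Kn q _ w)), hF. rewrite Rplus_0_l.
      instantiate (1 := fun k => F k * ((Re (I3 q (- ee k) w) - Re (I3 q (ee k) w)) / ee k)).
      simpl. field. apply ee_nz. }
    replace (Re (RtoC (AL * (-2 * dR)) + Ci * RtoC (AL * (-2 * dI)))%C) with (AL * (- 2 * dR))
      by (unfold Re, Ci, RtoC, Cmult, Cplus; simpl; ring).
    apply is_lim_seq_mult'; auto.
    apply (symdiff_lim (fun mu => Re (I3 q mu w))); auto.
  - eapply is_lim_seq_ext.
    { intro k. symmetry. rewrite (proj2 (Re_Kn q _ w)), hF. rewrite Rplus_0_l.
      instantiate (1 := fun k => F k * ((Im (I3 q (- ee k) w) - Im (I3 q (ee k) w)) / ee k)).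
      simpl. field. apply ee_nz. }
    replace (Im (RtoC (AL * (-2 * dR)) + Ci * RtoC (AL * (-2 * dI)))%C) with (AL * (- 2 * dI))
      by (unfold Im, Ci, RtoC, Cmult, Cplus; simpl; ring).
    apply is_lim_seq_mult'; auto.
    apply (symdiff_lim (fun mu => Im (I3 q mu w))); auto.
Qed.

Lemma nonint_of_not (x : R) : ~ is_integer x -> nonint x.
Proof. intros h n E. apply h. exists n. auto. Qed.
Lemma not_of_nonint (x : R) : nonint x -> ~ is_integer x.
Proof. intros h [n E]. apply (h n E). Qed.

Lemma K3_nonint_eq (q m : R) (w : C) : nonint m -> K3 q m w = K3_nonint q m w.
Proof.
  intro h. unfold K3. destruct (excluded_middle_informative (is_integer m)) as [hi|_]; auto.
  exfalso. apply (not_of_nonint m h hi).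
Qed.

Lemma nonint_int_ee (m : R) (k : nat) : is_integer m -> (1 <= k)%nat -> nonint (m + ee k).
Proof.
  intros [j Ej] hk n E. subst m. pose proof (ee_pos k). pose proof (ee_lt1 k hk).
  assert (E2 : ee k = IZR (n - j)) by (rewrite minus_IZR; lra).
  rewrite E2 in *. apply lt_IZR in H. apply lt_IZR in H0. lia.
Qed.

Lemma is_integer_plus (m : R) (j : Z) : is_integer m -> is_integer (m + IZR j).
Proof. intros [n E]. exists (n + j)%Z. rewrite plus_IZR. lra. Qed.

Section Final.
Variables (q : R).
Hypothesis hq : 0 < q < 1.
Let sq := Rpower q (1 / 2).
Let isq := Rpower q (- 1 / 2).
Let D := RtoC (1 - q ^ 2).

Lemma Kup (mu : R) (z : C) : nonint mu -> slit z ->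
  K3_nonint q (mu + 1) z =
  Cmult (RtoC (/ (2 * Rpower q (mu / 2))))
   (Cminus (Cplus (Cmult (RtoC (- 4)) (Cmult (Cinv (Cmult D z)) (K3_nonint q mu (Cmult (RtoC isq) z))))
                  (Cmult (RtoC (2 * (Rpower q (- mu) + Rpower q mu))) (Cmult (Cinv (Cmult D z)) (K3_nonint q mu (Cmult (RtoC sq) z)))))
           (Cmult (RtoC (- 2 * (Rpower q (- mu) - Rpower q mu))) (Cmult (Cinv (Cmult D z)) (K3_nonint q mu (Cmult (RtoC sq) z))))).
Proof.
  intros hmu hz. unfold D, sq, isq.
  rewrite <- (KR1 q mu z hq hmu hz), <- (KR2 q mu z hq hmu hz).
  pose proof (Rpower_pos q (mu / 2)).
  rewrite RtoC_inv by lra. rewrite RtoC_mult.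
  field; repeat split; try (apply RtoC_nz; lra); try (intro E; injection E; lra).
Qed.

Lemma Kdown (mu : R) (z : C) : nonint mu -> slit z ->
  K3_nonint q (mu - 1) z =
  Cmult (RtoC (/ (2 * Rpower q (- mu / 2))))
   (Cplus (Cplus (Cmult (RtoC (- 4)) (Cmult (Cinv (Cmult D z)) (K3_nonint q mu (Cmult (RtoC isq) z))))
                  (Cmult (RtoC (2 * (Rpower q (- mu) + Rpower q mu))) (Cmult (Cinv (Cmult D z)) (K3_nonint q mu (Cmult (RtoC sq) z)))))
           (Cmult (RtoC (- 2 * (Rpower q (- mu) - Rpower q mu))) (Cmult (Cinv (Cmult D z)) (K3_nonint q mu (Cmult (RtoC sq) z))))).
Proof.
  intros hmu hz. unfold D, sq, isq.
  rewrite <- (KR1 q mu z hq hmu hz), <- (KR2 q mu z hq hmu hz).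
  pose proof (Rpower_pos q (- mu / 2)).
  rewrite RtoC_inv by lra. rewrite RtoC_mult.
  field; repeat split; try (apply RtoC_nz; lra); try (intro E; injection E; lra).
Qed.

Definition ConvAt (m : R) := forall w, slit w -> exists L, Ccv (fun k => K3_nonint q (m + ee k) w) L.

Lemma cont_seq (f : R -> R) (m d : R) : is_derive f m d ->
  Ccv (fun k => RtoC (f (m + ee k))) (RtoC (f m)).
Proof.
  intro hd. apply Ccv_RtoC. exact (deriv_cont_seq f m d ee hd ee_lim ee_nz).
Qed.

Lemma sl1 (w : C) : slit w -> slit (Cmult (RtoC sq) w).
Proof. intro h. apply slit_scale; auto. apply Rpower_pos. Qed.
Lemma sl2 (w : C) : slit w -> slit (Cmult (RtoC isq) w).
Proof. intro h. apply slit_scale; auto. apply Rpower_pos. Qed.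

Lemma d_c0 (m : R) : exists d, is_derive (fun mu => / (2 * Rpower q (mu / 2))) m d.
Proof.
  eexists. unfold Rpower. auto_derive. pose proof (exp_pos (m / 2 * ln q)). lra. reflexivity.
Qed.
Lemma d_c0' (m : R) : exists d, is_derive (fun mu => / (2 * Rpower q (- mu / 2))) m d.
Proof.
  eexists. unfold Rpower. auto_derive. pose proof (exp_pos (- m / 2 * ln q)). lra. reflexivity.
Qed.
Lemma d_c2 (m : R) : exists d, is_derive (fun mu => 2 * (Rpower q (- mu) + Rpower q mu)) m d.
Proof. eexists. unfold Rpower. auto_derive. auto. reflexivity. Qed.
Lemma d_c3 (m : R) : exists d, is_derive (fun mu => - 2 * (Rpower q (- mu) - Rpower q mu)) m d.
Proof. eexists. unfold Rpower. auto_derive. auto. reflexivity. Qed.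
Lemma d_p1 (m : R) : exists d, is_derive (fun mu => Rpower q (- mu / 2)) m d.
Proof. eexists. unfold Rpower. auto_derive. auto. reflexivity. Qed.
Lemma d_p2 (m : R) : exists d, is_derive (fun mu => Rpower q (mu / 2)) m d.
Proof. eexists. unfold Rpower. auto_derive. auto. reflexivity. Qed.

Lemma conv_up (m : R) : is_integer m -> ConvAt m -> ConvAt (m + 1).
Proof.
  intros hi Hm w hw.
  destruct (Hm _ (sl2 w hw)) as [L2 H2]. destruct (Hm _ (sl1 w hw)) as [L1 H1].
  destruct (d_c0 m) as [d0 h0]. destruct (d_c2 m) as [d2 h2]. destruct (d_c3 m) as [d3 h3].
  eexists.
  eapply Ccv_ext.
  { intros k hk. replace (m + 1 + ee k) with ((m + ee k) + 1) by ring.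
    symmetry. apply Kup; auto. apply nonint_int_ee; auto. }
  apply Ccv_mult. apply (cont_seq (fun mu => / (2 * Rpower q (mu / 2))) m d0 h0).
  apply Ccv_minus. apply Ccv_plus.
  - apply Ccv_mult. apply Ccv_const. apply Ccv_mult. apply Ccv_const. exact H2.
  - apply Ccv_mult. apply (cont_seq (fun mu => 2 * (Rpower q (- mu) + Rpower q mu)) m d2 h2).
    apply Ccv_mult. apply Ccv_const. exact H1.
  - apply Ccv_mult. apply (cont_seq (fun mu => - 2 * (Rpower q (- mu) - Rpower q mu)) m d3 h3).
    apply Ccv_mult. apply Ccv_const. exact H1.
Qed.

Lemma conv_down (m : R) : is_integer m -> ConvAt m -> ConvAt (m - 1).
Proof.
  intros hi Hm w hw.
  destruct (Hm _ (sl2 w hw)) as [L2 H2]. destruct (Hm _ (sl1 w hw)) as [L1 H1].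
  destruct (d_c0' m) as [d0 h0]. destruct (d_c2 m) as [d2 h2]. destruct (d_c3 m) as [d3 h3].
  eexists.
  eapply Ccv_ext.
  { intros k hk. replace (m - 1 + ee k) with ((m + ee k) - 1) by ring.
    symmetry. apply Kdown; auto. apply nonint_int_ee; auto. }
  apply Ccv_mult. apply (cont_seq (fun mu => / (2 * Rpower q (- mu / 2))) m d0 h0).
  apply Ccv_plus. apply Ccv_plus.
  - apply Ccv_mult. apply Ccv_const. apply Ccv_mult. apply Ccv_const. exact H2.
  - apply Ccv_mult. apply (cont_seq (fun mu => 2 * (Rpower q (- mu) + Rpower q mu)) m d2 h2).
    apply Ccv_mult. apply Ccv_const. exact H1.
  - apply Ccv_mult. apply (cont_seq (fun mu => - 2 * (Rpower q (- mu) - Rpower q mu)) m d3 h3).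
    apply Ccv_mult. apply Ccv_const. exact H1.
Qed.

Lemma conv_all (n : Z) : ConvAt (IZR n).
Proof.
  assert (Hpos : forall k : nat, ConvAt (IZR (Z.of_nat k)) /\ ConvAt (IZR (- Z.of_nat k))).
  { induction k as [|k [IH1 IH2]].
    - simpl. split; intros w hw; apply conv0; auto.
    - rewrite Nat2Z.inj_succ. split.
      + rewrite succ_IZR. apply conv_up; auto. exists (Z.of_nat k); auto.
      + replace (IZR (- Z.succ (Z.of_nat k))) with (IZR (- Z.of_nat k) - 1)
          by (rewrite !opp_IZR, succ_IZR; ring).
        apply conv_down; auto. exists (- Z.of_nat k)%Z; auto. }
  destruct (Z_le_gt_dec 0 n).
  - replace n with (Z.of_nat (Z.to_nat n)) by (apply Z2Nat.id; lia). apply Hpos.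
  - replace n with (- Z.of_nat (Z.to_nat (- n)))%Z by (rewrite Z2Nat.id; lia). apply Hpos.
Qed.

Lemma conv_int (m : R) (w : C) : is_integer m -> slit w ->
  exists L, Ccv (fun k => K3_nonint q (m + ee k) w) L /\ K3 q m w = L.
Proof.
  intros [n ->] hw. destruct (conv_all n w hw) as [L HL]. exists L. split; auto.
  apply K3_int; auto. exists n; auto.
Qed.

End Final.

Theorem proposition3p2 (q nu : R) (z : C)
  (hq0 : 0 < q) (hq1 : q < 1) (hz : ~ (Im z = 0 /\ Re z <= 0)) :
  Cminus (Cmult (RtoC (Rpower q (- nu / 2))) (K3 q (nu - 1) z))
         (Cmult (RtoC (Rpower q (nu / 2))) (K3 q (nu + 1) z))
  = Cmult (RtoC (- 2 * (Rpower q (- nu) - Rpower q nu)))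
      (Cmult (Cinv (Cmult (RtoC (1 - q ^ 2)) z))
             (K3 q nu (Cmult (RtoC (Rpower q (1 / 2))) z)))
  /\
  Cplus (Cmult (RtoC (Rpower q (- nu / 2))) (K3 q (nu - 1) z))
        (Cmult (RtoC (Rpower q (nu / 2))) (K3 q (nu + 1) z))
  = Cplus
      (Cmult (RtoC (- 4))
        (Cmult (Cinv (Cmult (RtoC (1 - q ^ 2)) z))
               (K3 q nu (Cmult (RtoC (Rpower q (- 1 / 2))) z))))
      (Cmult (RtoC (2 * (Rpower q (- nu) + Rpower q nu)))
        (Cmult (Cinv (Cmult (RtoC (1 - q ^ 2)) z))
               (K3 q nu (Cmult (RtoC (Rpower q (1 / 2))) z)))).
Proof.
  assert (hq : 0 < q < 1) by lra.
  assert (hs : slit z) by exact hz.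
  set (z1 := Cmult (RtoC (Rpower q (1 / 2))) z).
  set (z2 := Cmult (RtoC (Rpower q (- 1 / 2))) z).
  assert (hs1 : slit z1) by (apply slit_scale; auto; apply Rpower_pos).
  assert (hs2 : slit z2) by (apply slit_scale; auto; apply Rpower_pos).
  destruct (excluded_middle_informative (is_integer nu)) as [hi|hn].
  - assert (hi1 : is_integer (nu - 1)).
    { destruct hi as [n E]. exists (n - 1)%Z. rewrite minus_IZR. lra. }
    assert (hi2 : is_integer (nu + 1)).
    { destruct hi as [n E]. exists (n + 1)%Z. rewrite plus_IZR. lra. }
    destruct (conv_int q hq (nu - 1) z hi1 hs) as [L1 [HL1 E1]].
    destruct (conv_int q hq (nu + 1) z hi2 hs) as [L2 [HL2 E2]].
    destruct (conv_int q hq nu z1 hi hs1) as [L3 [HL3 E3]].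
    destruct (conv_int q hq nu z2 hi hs2) as [L4 [HL4 E4]].
    rewrite E1, E2, E3, E4.
    destruct (d_p1 q nu) as [dp1 hp1]. destruct (d_p2 q nu) as [dp2 hp2].
    destruct (d_c2 q nu) as [dc2 hc2]. destruct (d_c3 q nu) as [dc3 hc3].
    assert (HA : Ccv (fun k => RtoC (Rpower q (- (nu + ee k) / 2))) (RtoC (Rpower q (- nu / 2))))
      by exact (cont_seq (fun mu => Rpower q (- mu / 2)) nu dp1 hp1).
    assert (HB : Ccv (fun k => RtoC (Rpower q ((nu + ee k) / 2))) (RtoC (Rpower q (nu / 2))))
      by exact (cont_seq (fun mu => Rpower q (mu / 2)) nu dp2 hp2).
    assert (HC2 : Ccv (fun k => RtoC (2 * (Rpower q (- (nu + ee k)) + Rpower q (nu + ee k))))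
                      (RtoC (2 * (Rpower q (- nu) + Rpower q nu))))
      by exact (cont_seq (fun mu => 2 * (Rpower q (- mu) + Rpower q mu)) nu dc2 hc2).
    assert (HC3 : Ccv (fun k => RtoC (- 2 * (Rpower q (- (nu + ee k)) - Rpower q (nu + ee k))))
                      (RtoC (- 2 * (Rpower q (- nu) - Rpower q nu))))
      by exact (cont_seq (fun mu => - 2 * (Rpower q (- mu) - Rpower q mu)) nu dc3 hc3).
    assert (hnk : forall k, (1 <= k)%nat -> nonint (nu + ee k)) by (intros; apply nonint_int_ee; auto).
    split.
    + apply (Ccv_unique (fun k => Cminus (Cmult (RtoC (Rpower q (- (nu + ee k) / 2))) (K3_nonint q (nu - 1 + ee k) z))
                                        (Cmult (RtoC (Rpower q ((nu + ee k) / 2))) (K3_nonint q (nu + 1 + ee k) z)))).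
      * apply Ccv_minus; apply Ccv_mult; auto.
      * eapply Ccv_ext.
        { intros k hk. replace (nu - 1 + ee k) with ((nu + ee k) - 1) by ring.
          replace (nu + 1 + ee k) with ((nu + ee k) + 1) by ring.
          symmetry. apply KR1; auto. }
        apply Ccv_mult; auto. apply Ccv_mult. apply Ccv_const. exact HL3.
    + apply (Ccv_unique (fun k => Cplus (Cmult (RtoC (Rpower q (- (nu + ee k) / 2))) (K3_nonint q (nu - 1 + ee k) z))
                                       (Cmult (RtoC (Rpower q ((nu + ee k) / 2))) (K3_nonint q (nu + 1 + ee k) z)))).
      * apply Ccv_plus; apply Ccv_mult; auto.
      * eapply Ccv_ext.
        { intros k hk. replace (nu - 1 + ee k) with ((nu + ee k) - 1) by ring.
          replace (nu + 1 + ee k) with ((nu + ee k) + 1) by ring.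
          symmetry. apply KR2; auto. }
        apply Ccv_plus.
        -- apply Ccv_mult. apply Ccv_const. apply Ccv_mult. apply Ccv_const. exact HL4.
        -- apply Ccv_mult; auto. apply Ccv_mult. apply Ccv_const. exact HL3.
  - assert (hn0 : nonint nu) by (apply nonint_of_not; auto).
    assert (hn1 : nonint (nu - 1)).
    { replace (nu - 1) with (nu + IZR (-1)) by (simpl; ring). apply nonint_add_int; auto. }
    assert (hn2 : nonint (nu + 1)).
    { replace (nu + 1) with (nu + IZR 1) by (simpl; ring). apply nonint_add_int; auto. }
    rewrite !K3_nonint_eq by auto.
    split.
    + apply KR1; auto.
    + apply KR2; auto.
Qed.
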